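(* Let $u_0\in H^s(\mathbb R)$ with $s$ large enough that the quantities below are finite, $T>0$, $c>0$, $\Delta t,\Delta x>0$. For every $n\in\{0,\dots,N-1\}$, every $\gamma\in[0,\frac12)$ and every $\theta\in[\frac12,1]$, $$\begin{aligned}\|\mathcal A_\theta e^{n+1}\|^2_{\ell^2_\Delta}\le{}&\|\mathcal A_\theta e^n\|^2_{\ell^2_\Delta}[1+\Delta tE_a]+\Delta t\|\epsilon^n\|^2_{\ell^2_\Delta}\Big\{1+4\frac{\Delta t}{\Delta x}+\Delta t\Big\}+\Delta t\langle B_b,[D_+(e)^n]^2\rangle\\&+\Delta t^2B_c\|D(e)^n\|^2_{\ell^2_\Delta}+\Delta tB_e\|D_+D(e)^n\|^2_{\ell^2_\Delta}+\Delta tB_f\|D_+D_+D_-(e)^n\|^2_{\ell^2_\Delta},\end{aligned}$$ where, with $U=\|[u_\Delta]^n\|_{\ell^\infty}$, $U_+=\|D_+([u_\Delta])^n\|_{\ell^\infty}$, $E=\|e^n\|_{\ell^\infty}$, $X=\Delta x^{\frac12-\gamma}+E+9E^2\Delta x^{\gamma-\frac12}$, $\mathbf 1=(1,1,\dots)$: $$E_a=U^2\Big(1+\frac{\Delta t}{\Delta x}\Big)+U_+\Big(7+\frac{\Delta t}{\Delta x}\Big[2c+\frac23E+\frac32U\Big]\Big)+U_+^2\Big[\sqrt2\frac{\sqrt{\Delta t}}{\sqrt{\Delta x}}+\frac{\Delta t^2}{\Delta x^2}\Big]+1+2c^2\frac{\Delta t}{\Delta x},$$ $$B_b=\Big(\frac{\Delta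 x}{6}D_+(e)^n-c\mathbf 1\Big)(\Delta x-c\Delta t),\qquad B_c=U^2+\Big\{E^2[1+\Delta x]+2EU+\frac{2c}{3}E\Big\}-c^2,$$ $$B_e=2(1-\theta)\Delta t\Big\{U+E+\frac12+\frac X2\Big\}-\Delta x,\qquad B_f=\Delta t\Big\{(1-2\theta)+\frac{(1-\theta)\Delta x^2}{2}\Big[c+\frac12+\frac X2\Big]\Big\}-\frac{\Delta x^3}{4}.$$
   Context: KdV equation $\partial_t u+\partial_x(u^2/2)+\partial_x^3u=0$ with datum $u_0$ and exact solution $u$. $t^n=n\Delta t$, $x_j=j\Delta x$, $N=\lfloor T/\Delta t\rfloor$. For sequences: $D_+(a)_j=(a_{j+1}-a_j)/\Delta x$, $D_-(a)_j=(a_j-a_{j-1})/\Delta x$, $D=\frac12(D_++D_-)$; products and powers componentwise; $\langle a,b\rangle=\Delta x\sum_ja_jb_j$, $\|a\|_{\ell^2_\Delta}=\langle a,a\rangle^{1/2}$, $\|a\|_{\ell^\infty}=\sup_j|a_j|$. $\mathcal A_\theta=I+\theta\Delta tD_+D_+D_-$. Scheme with parameters $c,\theta$: $\frac{v^{n+1}_j-v^n_j}{\Delta t}+D(\frac{v^2}{2})^n_j+\theta D_+D_+D_-(v)^{n+1}_j+(1-\theta)D_+D_+D_-(v)^n_j=\frac{c\Delta x}{2}D_+D_-(v)^n_j$, with $v^0_j=\frac1{\Delta x}\int_{x_j}^{x_{j+1}}u_0$. Averaged exact solution $[u_\Delta]^0_j=\frac1{\Delta x}\int_{x_j}^{x_{j+1}}u_0$,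 $[u_\Delta]^n_j=\frac{1}{\Delta x(\min(t^{n+1},T)-t^n)}\int_{t^n}^{\min(t^{n+1},T)}\int_{x_j}^{x_{j+1}}u\,dy\,ds$ for $n\ge1$. Error $e^n_j=v^n_j-[u_\Delta]^n_j$. Consistency error $\epsilon^n_j=\frac{[u_\Delta]^{n+1}_j-[u_\Delta]^n_j}{\Delta t}+D(\frac{[u_\Delta]^2}{2})^n_j+\theta D_+D_+D_-([u_\Delta])^{n+1}_j+(1-\theta)D_+D_+D_-([u_\Delta])^n_j-\frac{c\Delta x}{2}D_+D_-([u_\Delta])^n_j$. *)

(* Defs.v *)
From Stdlib Require Import Reals Lra ZArith.
From Coquelicot Require Import Coquelicot.
Open Scope R_scope.

(** Sequences indexed by j in Z (grid points x_j = j*dx). *)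
Definition seqZ := Z -> R.

Definition sumZ (a : seqZ) : R :=
  Series (fun k : nat => a (Z.of_nat k)) +
  Series (fun k : nat => a (- Z.of_nat (S k))%Z).

Definition summableZ (a : seqZ) : Prop :=
  ex_series (fun k : nat => Rabs (a (Z.of_nat k))) /\
  ex_series (fun k : nat => Rabs (a (- Z.of_nat (S k))%Z)).

Definition l2Z (a : seqZ) : Prop := summableZ (fun j => (a j) ^ 2).

Definition ipD (dx : R) (a b : seqZ) : R := dx * sumZ (fun j => a j * b j).
Definition nrmD (dx : R) (a : seqZ) : R := sqrt (ipD dx a a).

Definition supnorm (a : seqZ) : R :=
  real (Lub_Rbar (fun r => exists j : Z, r = Rabs (a j))).

Definition Dp (dx : R) (a : seqZ) : seqZ := fun j => (a (j + 1)%Z - a j) / dx.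
Definition Dm (dx : R) (a : seqZ) : seqZ := fun j => (a j - a (j - 1)%Z) / dx.
Definition Dc (dx : R) (a : seqZ) : seqZ := fun j => (Dp dx a j + Dm dx a j) / 2.
Definition D3 (dx : R) (a : seqZ) : seqZ := Dp dx (Dp dx (Dm dx a)).

Definition Atheta (theta dt dx : R) (a : seqZ) : seqZ :=
  fun j => a j + theta * dt * D3 dx a j.

Definition Nsteps (T dt : R) : nat := Z.to_nat (Int_part (T / dt)).

Definition tn (dt : R) (n : nat) : R := INR n * dt.
Definition xj (dx : R) (j : Z) : R := IZR j * dx.

(** Averaged exact solution [u_Delta]^n_j ; u : time -> space -> R *)
Definition uavg (u0 : R -> R) (u : R -> R -> R) (T dt dx : R) (n : nat) : seqZ :=
  fun j =>
  match n with
  | O => / dx * RInt u0 (xj dx j) (xj dx (j + 1))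
  | S _ =>
      / (dx * (Rmin (tn dt (S n)) T - tn dt n)) *
      RInt (fun s => RInt (fun y => u s y) (xj dx j) (xj dx (j + 1)))
           (tn dt n) (Rmin (tn dt (S n)) T)
  end.

Definition scheme (c theta dt dx : R) (v : nat -> seqZ) : Prop :=
  forall (n : nat) (j : Z),
    (v (S n) j - v n j) / dt + Dc dx (fun i => (v n i) ^ 2 / 2) j
    + theta * D3 dx (v (S n)) j + (1 - theta) * D3 dx (v n) j
    = c * dx / 2 * Dp dx (Dm dx (v n)) j.

Definition consist (c theta dt dx : R) (w : nat -> seqZ) (n : nat) : seqZ :=
  fun j =>
    (w (S n) j - w n j) / dt + Dc dx (fun i => (w n i) ^ 2 / 2) j
    + theta * D3 dx (w (S n)) j + (1 - theta) * D3 dx (w n) j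
    - c * dx / 2 * Dp dx (Dm dx (w n)) j.

Definition kdv_solution (u0 : R -> R) (u : R -> R -> R) (T : R) : Prop :=
  (forall x, u 0 x = u0 x) /\
  (forall t x, 0 <= t <= T -> continuous (fun p : R * R => u (fst p) (snd p)) (t, x)) /\
  (forall t x, 0 < t < T ->
     ex_derive (fun s => u s x) t /\
     ex_derive (fun y => (u t y) ^ 2 / 2) x /\
     ex_derive_n (fun y => u t y) 3 x /\
     Derive (fun s => u s x) t + Derive (fun y => (u t y) ^ 2 / 2) x
       + Derive_n (fun y => u t y) 3 x = 0).

Definition Xq (gamma dx E : R) : R :=
  Rpower dx (1/2 - gamma) + E + 9 * E ^ 2 * Rpower dx (gamma - 1/2).

Definition Ea (c dt dx U Up E : R) : R :=
  U ^ 2 * (1 + dt / dx)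
  + Up * (7 + dt / dx * (2 * c + 2 / 3 * E + 3 / 2 * U))
  + Up ^ 2 * (sqrt 2 * sqrt dt / sqrt dx + dt ^ 2 / dx ^ 2)
  + 1 + 2 * c ^ 2 * dt / dx.

Definition Bb (c dt dx : R) (Dpe : seqZ) : seqZ :=
  fun j => (dx / 6 * Dpe j - c * 1) * (dx - c * dt).

Definition Bc (c dx U E : R) : R :=
  U ^ 2 + (E ^ 2 * (1 + dx) + 2 * E * U + 2 * c / 3 * E) - c ^ 2.

Definition Be (theta gamma dt dx U E : R) : R :=
  2 * (1 - theta) * dt * (U + E + 1/2 + Xq gamma dx E / 2) - dx.

Definition Bf (c theta gamma dt dx E : R) : R :=
  dt * ((1 - 2 * theta) + (1 - theta) * dx ^ 2 / 2 * (c + 1/2 + Xq gamma dx E / 2))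
  - dx ^ 3 / 4.

(* Main.v *)
Require Import Defs.
From Stdlib Require Import Reals Lra Lia ZArith Psatz.
From Coquelicot Require Import Coquelicot.
Open Scope R_scope.

Lemma exs_plus (a b : nat -> R) : ex_series a -> ex_series b -> ex_series (fun n => a n + b n).
Proof. intros Ha Hb. exact (ex_series_plus a b Ha Hb). Qed.

Lemma exs_scal (c : R) (a : nat -> R) : ex_series a -> ex_series (fun n => c * a n).
Proof. intros Ha. exact (ex_series_scal_l c a Ha). Qed.

Lemma exs_le (a b : nat -> R) : (forall n, Rabs (b n) <= a n) -> ex_series a -> ex_series b.
Proof. intros H Ha. apply ex_series_Rabs. apply (@ex_series_le R_AbsRing R_CompleteNormedModule _ a); auto.
  intros n. unfold norm; simpl. unfold abs; simpl. rewrite Rabs_Rabsolu. apply H. Qed.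

Lemma exs_abs (a : nat -> R) : ex_series (fun n => Rabs (a n)) -> ex_series a.
Proof. apply ex_series_Rabs. Qed.

Definition sm (a : seqZ) := summableZ a.

Lemma sm_le (a b : seqZ) : (forall j, Rabs (b j) <= a j) -> sm a -> sm b.
Proof. intros H [H1 H2]. split.
  - apply (exs_le (fun k => Rabs (a (Z.of_nat k)))); auto.
    intros n. rewrite Rabs_Rabsolu. eapply Rle_trans; [apply H|apply RRle_abs].
  - apply (exs_le (fun k => Rabs (a (- Z.of_nat (S k))%Z))); auto.
    intros n. rewrite Rabs_Rabsolu. eapply Rle_trans; [apply H|apply RRle_abs].
Qed.

Lemma sm_plus (a b : seqZ) : sm a -> sm b -> sm (fun j => a j + b j).
Proof. intros [A1 A2] [B1 B2]. split.
  - apply (exs_le (fun k => Rabs (a (Z.of_nat k)) + Rabs (b (Z.of_nat k)))).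
    + intros n. rewrite Rabs_Rabsolu. apply Rabs_triang.
    + apply exs_plus; auto.
  - apply (exs_le (fun k => Rabs (a (- Z.of_nat (S k))%Z) + Rabs (b (- Z.of_nat (S k))%Z))).
    + intros n. rewrite Rabs_Rabsolu. apply Rabs_triang.
    + apply exs_plus; auto.
Qed.

Lemma sm_scal (c : R) (a : seqZ) : sm a -> sm (fun j => c * a j).
Proof. intros [A1 A2]. split.
  - apply (exs_le (fun k => Rabs c * Rabs (a (Z.of_nat k)))).
    + intros n. rewrite Rabs_Rabsolu, Rabs_mult. lra.
    + apply exs_scal; auto.
  - apply (exs_le (fun k => Rabs c * Rabs (a (- Z.of_nat (S k))%Z))).
    + intros n. rewrite Rabs_Rabsolu, Rabs_mult. lra.
    + apply exs_scal; auto.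
Qed.

Lemma sm_abs (a : seqZ) : sm a -> sm (fun j => Rabs (a j)).
Proof. intros [A1 A2]. split.
  - apply (ex_series_ext (fun k => Rabs (a (Z.of_nat k)))); auto. intros n; rewrite Rabs_Rabsolu; auto.
  - apply (ex_series_ext (fun k => Rabs (a (- Z.of_nat (S k))%Z))); auto. intros n; rewrite Rabs_Rabsolu; auto.
Qed.

Lemma sm_ext (a b : seqZ) : (forall j, a j = b j) -> sm a -> sm b.
Proof. intros H Ha. apply (sm_le (fun j => Rabs (a j))); [|apply sm_abs; auto].
  intros j. rewrite H. lra. Qed.

Lemma sm_dom (a b : seqZ) : (forall j, Rabs (b j) <= Rabs (a j)) -> sm a -> sm b.
Proof. intros H Ha. apply (sm_le (fun j => Rabs (a j))); auto. apply sm_abs; auto. Qed.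

Lemma sm_opp (a : seqZ) : sm a -> sm (fun j => - a j).
Proof. intros H. apply (sm_dom a); auto. intros j. rewrite Rabs_Ropp. lra. Qed.

Lemma sm_minus (a b : seqZ) : sm a -> sm b -> sm (fun j => a j - b j).
Proof. intros Ha Hb. apply (sm_ext (fun j => a j + - b j)). intros; ring.
  apply sm_plus; auto. apply sm_opp; auto. Qed.

Lemma sumZ_plus (a b : seqZ) : sm a -> sm b -> sumZ (fun j => a j + b j) = sumZ a + sumZ b.
Proof. intros [A1 A2] [B1 B2]. unfold sumZ.
  rewrite (Series_plus (fun k => a (Z.of_nat k)) (fun k => b (Z.of_nat k))) by (apply exs_abs; auto).
  rewrite (Series_plus (fun k => a (- Z.of_nat (S k))%Z) (fun k => b (- Z.of_nat (S k))%Z)) by (apply exs_abs; auto).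
  ring. Qed.

Lemma sumZ_scal (c : R) (a : seqZ) : sumZ (fun j => c * a j) = c * sumZ a.
Proof. unfold sumZ. rewrite !Series_scal_l. ring. Qed.

Lemma sumZ_opp (a : seqZ) : sumZ (fun j => - a j) = - sumZ a.
Proof. unfold sumZ. rewrite !Series_opp. ring. Qed.

Lemma sumZ_minus (a b : seqZ) : sm a -> sm b -> sumZ (fun j => a j - b j) = sumZ a - sumZ b.
Proof. intros Ha Hb. unfold Rminus. rewrite sumZ_plus; auto. rewrite sumZ_opp. auto.
  apply sm_opp; auto. Qed.

Lemma sumZ_ext (a b : seqZ) : (forall j, a j = b j) -> sumZ a = sumZ b.
Proof. intros H. unfold sumZ. f_equal; apply Series_ext; intros; apply H. Qed.

Lemma Series_0 : Series (fun _ : nat => 0) = 0.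
Proof. rewrite (Series_ext _ (fun n => 0 * (fun _ => 1) n)). rewrite Series_scal_l. ring. intros; ring. Qed.

Lemma sumZ_nonneg (a : seqZ) : sm a -> (forall j, 0 <= a j) -> 0 <= sumZ a.
Proof. intros [A1 A2] H. unfold sumZ. apply Rplus_le_le_0_compat.
  - replace 0 with (Series (fun _ : nat => 0)). apply Series_le. intros; split; [lra|apply H].
    apply exs_abs; auto. rewrite Series_0; auto.
  - replace 0 with (Series (fun _ : nat => 0)). apply Series_le. intros; split; [lra|apply H].
    apply exs_abs; auto. rewrite Series_0; auto.
Qed.

Lemma sumZ_le (a b : seqZ) : sm a -> sm b -> (forall j, a j <= b j) -> sumZ a <= sumZ b.
Proof. intros Ha Hb H. assert (0 <= sumZ (fun j => b j - a j)).
  apply sumZ_nonneg. apply sm_minus; auto. intros j; specialize (H j); lra.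
  rewrite sumZ_minus in H0; auto. lra. Qed.

Lemma exs_S (f : nat -> R) : ex_series f -> ex_series (fun k => f (S k)).
Proof. intros H. apply (proj1 (ex_series_incr_1 f)). auto. Qed.

Lemma sm_shift (a : seqZ) : sm a -> sm (fun j => a (j + 1)%Z).
Proof. intros [A1 A2]. split.
  - apply (ex_series_ext (fun k => Rabs (a (Z.of_nat (S k))))).
    intros n. f_equal. f_equal. lia.
    apply (exs_S (fun k => Rabs (a (Z.of_nat k)))); auto.
  - apply (proj2 (ex_series_incr_1 _)).
    apply (ex_series_ext (fun k => Rabs (a (- Z.of_nat (S k))%Z))); auto.
    intros n. f_equal. f_equal. lia.
Qed.

Lemma sm_shiftm (a : seqZ) : sm a -> sm (fun j => a (j - 1)%Z).
Proof. intros [A1 A2]. split.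
  - apply (proj2 (ex_series_incr_1 _)).
    apply (ex_series_ext (fun k => Rabs (a (Z.of_nat k)))); auto.
    intros n. f_equal. f_equal. lia.
  - apply (ex_series_ext (fun k => Rabs (a (- Z.of_nat (S (S k)))%Z))).
    intros n. f_equal. f_equal. lia.
    apply (exs_S (fun k => Rabs (a (- Z.of_nat (S k))%Z))); auto.
Qed.

Lemma sumZ_shift (a : seqZ) : sm a -> sumZ (fun j => a (j + 1)%Z) = sumZ a.
Proof. intros [A1 A2]. unfold sumZ.
  assert (E1 : Series (fun k => a (Z.of_nat k)) = a 0%Z + Series (fun k => a (Z.of_nat k + 1)%Z)).
  { rewrite Series_incr_1 by (apply exs_abs; auto). f_equal. apply Series_ext. intros n. f_equal. lia. }
  assert (E2 : Series (fun k => a (- Z.of_nat (S k) + 1)%Z) = a 0%Z + Series (fun k => a (- Z.of_nat (S k))%Z)).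
  { rewrite Series_incr_1. f_equal. apply Series_ext. intros n. f_equal. lia.
    apply (ex_series_ext (fun k => a (- Z.of_nat k)%Z)). intros n; f_equal; lia.
    apply (proj2 (ex_series_incr_1 _)). apply exs_abs.
    apply (ex_series_ext (fun k => Rabs (a (- Z.of_nat (S k))%Z))); auto. }
  rewrite E1, E2. ring. Qed.


Lemma sumZ_shiftm (a : seqZ) : sm a -> sumZ (fun j => a (j - 1)%Z) = sumZ a.
Proof. intros Ha. rewrite <- (sumZ_shift (fun j => a (j - 1)%Z)).
  apply sumZ_ext. intros j. f_equal. lia. apply sm_shiftm; auto. Qed.

Lemma sm_shiftk (a : seqZ) (k : Z) : sm a -> sm (fun j => a (j + k)%Z).
Proof. intros Ha. destruct (Z_le_gt_dec 0 k) as [Hk|Hk].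
  - replace k with (Z.of_nat (Z.to_nat k)) by lia. induction (Z.to_nat k) as [|m IH].
    + apply (sm_ext a); auto. intros j; f_equal; lia.
    + apply (sm_ext (fun j => (fun i => a (i + Z.of_nat m)%Z) (j + 1)%Z)). intros j; cbv beta; f_equal; lia.
      apply (sm_shift (fun j => a (j + Z.of_nat m)%Z)); auto.
  - replace k with (- Z.of_nat (Z.to_nat (- k)))%Z by lia. induction (Z.to_nat (-k)) as [|m IH].
    + apply (sm_ext a); auto. intros j; f_equal; lia.
    + apply (sm_ext (fun j => (fun i => a (i + - Z.of_nat m)%Z) (j - 1)%Z)). intros j; cbv beta; f_equal; lia.
      apply (sm_shiftm (fun j => a (j + - Z.of_nat m)%Z)); auto.
Qed.

Lemma sumZ_shiftk (a : seqZ) (k : Z) : sm a -> sumZ (fun j => a (j + k)%Z) = sumZ a.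
Proof. intros Ha. destruct (Z_le_gt_dec 0 k) as [Hk|Hk].
  - replace k with (Z.of_nat (Z.to_nat k)) by lia. induction (Z.to_nat k) as [|m IH].
    + apply sumZ_ext. intros j; f_equal; lia.
    + rewrite <- IH. rewrite <- (sumZ_shift (fun j => a (j + Z.of_nat m)%Z)).
      apply sumZ_ext. intros j; cbv beta; f_equal; lia. apply sm_shiftk; auto.
  - replace k with (- Z.of_nat (Z.to_nat (- k)))%Z by lia. induction (Z.to_nat (-k)) as [|m IH].
    + apply sumZ_ext. intros j; f_equal; lia.
    + rewrite <- IH. rewrite <- (sumZ_shiftm (fun j => a (j + - Z.of_nat m)%Z)).
      apply sumZ_ext. intros j; cbv beta; f_equal; lia. apply sm_shiftk; auto.
Qed.

Lemma sumZ_tele (phi : seqZ) : sm phi -> sumZ (fun j => phi (j + 1)%Z - phi j) = 0.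
Proof. intros H. rewrite sumZ_minus; auto. rewrite sumZ_shift; auto. ring. apply sm_shift; auto. Qed.

Definition bd (a : seqZ) := exists M, forall j, Rabs (a j) <= M.

Lemma l2_sm (a : seqZ) : l2Z a -> sm (fun j => a j * a j).
Proof. intros H. apply (sm_ext (fun j => a j ^ 2)); auto. intros; ring. Qed.

Lemma sm_prod (a b : seqZ) : l2Z a -> l2Z b -> sm (fun j => a j * b j).
Proof. intros Ha Hb. apply (sm_le (fun j => a j ^ 2 + b j ^ 2)).
  intros j. rewrite Rabs_mult. assert (0 <= (Rabs (a j) - Rabs (b j))^2) by apply pow2_ge_0.
  rewrite <- (pow2_abs (a j)), <- (pow2_abs (b j)). nra.
  apply sm_plus; auto. Qed.

Lemma l2_ext (a b : seqZ) : (forall j, a j = b j) -> l2Z a -> l2Z b.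
Proof. intros H Ha. unfold l2Z. apply (sm_ext (fun j => a j ^ 2)); auto. intros; rewrite H; auto. Qed.

Lemma l2_plus (a b : seqZ) : l2Z a -> l2Z b -> l2Z (fun j => a j + b j).
Proof. intros Ha Hb. unfold l2Z. apply (sm_ext (fun j => a j ^ 2 + b j ^ 2 + 2 * (a j * b j))).
  intros; ring. apply sm_plus. apply sm_plus; auto. apply sm_scal. apply sm_prod; auto. Qed.

Lemma l2_scal (c : R) (a : seqZ) : l2Z a -> l2Z (fun j => c * a j).
Proof. intros Ha. unfold l2Z. apply (sm_ext (fun j => c ^ 2 * a j ^ 2)). intros; ring.
  apply sm_scal; auto. Qed.

Lemma l2_opp (a : seqZ) : l2Z a -> l2Z (fun j => - a j).
Proof. intros Ha. apply (l2_ext (fun j => -1 * a j)). intros; ring. apply l2_scal; auto. Qed.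

Lemma l2_minus (a b : seqZ) : l2Z a -> l2Z b -> l2Z (fun j => a j - b j).
Proof. intros Ha Hb. apply (l2_ext (fun j => a j + - b j)). intros; ring.
  apply l2_plus; auto. apply l2_opp; auto. Qed.

Lemma l2_shiftk (a : seqZ) (k : Z) : l2Z a -> l2Z (fun j => a (j + k)%Z).
Proof. intros Ha. unfold l2Z. apply (sm_shiftk (fun j => a j ^ 2)); auto. Qed.

Lemma l2_shiftm (a : seqZ) (k : Z) : l2Z a -> l2Z (fun j => a (j - k)%Z).
Proof. intros Ha. apply (l2_ext (fun j => a (j + - k)%Z)). intros; f_equal; lia. apply l2_shiftk; auto. Qed.

Lemma l2_bd_mul (m a : seqZ) : bd m -> l2Z a -> l2Z (fun j => m j * a j).
Proof. intros [M HM] Ha. unfold l2Z. apply (sm_le (fun j => M ^ 2 * a j ^ 2)).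
  intros j. rewrite Rabs_right by (apply Rle_ge; apply pow2_ge_0).
  specialize (HM j).
  assert (0 <= Rabs (m j)) by apply Rabs_pos.
  replace ((m j * a j) ^ 2) with (Rabs (m j) ^ 2 * a j ^ 2).
  apply Rmult_le_compat_r. apply pow2_ge_0. nra.
  rewrite pow2_abs. ring.
  apply sm_scal; auto. Qed.

Lemma l2_mul_bd (m a : seqZ) : bd m -> l2Z a -> l2Z (fun j => a j * m j).
Proof. intros Hm Ha. apply (l2_ext (fun j => m j * a j)). intros; ring. apply l2_bd_mul; auto. Qed.

Lemma bd_const (c : R) : bd (fun _ => c).
Proof. exists (Rabs c). intros; lra. Qed.

Lemma bd_plus (a b : seqZ) : bd a -> bd b -> bd (fun j => a j + b j).
Proof. intros [A HA] [B HB]. exists (A + B). intros j. eapply Rle_trans. apply Rabs_triang.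
  specialize (HA j); specialize (HB j); lra. Qed.

Lemma bd_minus (a b : seqZ) : bd a -> bd b -> bd (fun j => a j - b j).
Proof. intros [A HA] [B HB]. exists (A + B). intros j. unfold Rminus. eapply Rle_trans. apply Rabs_triang.
  rewrite Rabs_Ropp. specialize (HA j); specialize (HB j); lra. Qed.

Lemma bd_mult (a b : seqZ) : bd a -> bd b -> bd (fun j => a j * b j).
Proof. intros [A HA] [B HB]. exists (A * B). intros j. rewrite Rabs_mult.
  specialize (HA j); specialize (HB j). apply Rmult_le_compat; auto; apply Rabs_pos. Qed.

Lemma bd_shiftk (a : seqZ) (k : Z) : bd a -> bd (fun j => a (j + k)%Z).
Proof. intros [A HA]. exists A. intros; auto. Qed.

Lemma bd_shiftm (a : seqZ) (k : Z) : bd a -> bd (fun j => a (j - k)%Z).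
Proof. intros [A HA]. exists A. intros; auto. Qed.

Lemma bd_opp (a : seqZ) : bd a -> bd (fun j => - a j).
Proof. intros [A HA]. exists A. intros; rewrite Rabs_Ropp; auto. Qed.

Lemma sumf_ge (a : nat -> R) : (forall n, 0 <= a n) -> forall k, 0 <= sum_f_R0 a k /\ a k <= sum_f_R0 a k.
Proof. intros H k. induction k as [|k [IH1 IH2]]; simpl. split; [apply H|lra].
  specialize (H (S k)). split; lra. Qed.

Lemma Series_ge_term (a : nat -> R) (k : nat) : (forall n, 0 <= a n) -> ex_series a -> a k <= Series a.
Proof. intros H Ha. rewrite (Series_incr_n a (S k)) by (auto; lia). simpl.
  assert (0 <= Series (fun n => a (S (k + n)))).
  { replace 0 with (Series (fun _ : nat => 0)) by apply Series_0. apply Series_le.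
    intros; split; [lra|apply H]. apply (ex_series_incr_n a (S k)); auto. }
  destruct (sumf_ge a H k). lra. Qed.

Lemma sm_bound (a : seqZ) : sm a -> bd a.
Proof. intros [A1 A2].
  exists (Series (fun k => Rabs (a (Z.of_nat k))) + Series (fun k => Rabs (a (- Z.of_nat (S k))%Z))).
  assert (P1 : 0 <= Series (fun k => Rabs (a (Z.of_nat k)))).
  { eapply Rle_trans; [|apply (Series_ge_term _ 0)]; auto; intros; apply Rabs_pos. }
  assert (P2 : 0 <= Series (fun k => Rabs (a (- Z.of_nat (S k))%Z))).
  { eapply Rle_trans; [|apply (Series_ge_term _ 0)]; auto; intros; apply Rabs_pos. }
  intros j. destruct (Z_le_gt_dec 0 j).
  - pose proof (Series_ge_term (fun k => Rabs (a (Z.of_nat k))) (Z.to_nat j) (fun n => Rabs_pos _) A1) as H.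
    cbv beta in H. rewrite Z2Nat.id in H by lia. lra.
  - pose proof (Series_ge_term (fun k => Rabs (a (- Z.of_nat (S k))%Z)) (Z.to_nat (- j - 1)) (fun n => Rabs_pos _) A2) as H.
    cbv beta in H. replace (- Z.of_nat (S (Z.to_nat (- j - 1))))%Z with j in H by lia. lra.
Qed.

Lemma l2_bd (a : seqZ) : l2Z a -> bd a.
Proof. intros H. destruct (sm_bound _ H) as [M HM]. exists (1 + M). intros j. specialize (HM j).
  rewrite Rabs_right in HM by (apply Rle_ge; apply pow2_ge_0).
  assert (0 <= Rabs (a j)) by apply Rabs_pos. rewrite <- pow2_abs in HM. nra. Qed.

Lemma supnorm_ge (a : seqZ) : bd a -> forall j, Rabs (a j) <= supnorm a.
Proof. intros [M HM] j. unfold supnorm.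
  destruct (Lub_Rbar_correct (fun r => exists j, r = Rabs (a j))) as [Hub Hlub].
  assert (Hle : Rbar_le (Lub_Rbar (fun r => exists j, r = Rabs (a j))) M).
  { apply Hlub. intros x [i ->]. simpl. apply HM. }
  assert (Hge : Rbar_le (Rabs (a j)) (Lub_Rbar (fun r => exists j, r = Rabs (a j)))).
  { apply Hub. exists j; auto. }
  destruct (Lub_Rbar (fun r => exists j, r = Rabs (a j))); simpl in *; try contradiction; auto. Qed.

Lemma supnorm_nonneg (a : seqZ) : bd a -> 0 <= supnorm a.
Proof. intros H. eapply Rle_trans; [apply Rabs_pos|apply (supnorm_ge a H 0%Z)]. Qed.

Lemma sm_bd_mul (m a : seqZ) : bd m -> sm a -> sm (fun j => m j * a j).
Proof. intros [M HM] Ha. apply (sm_le (fun j => M * Rabs (a j))).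
  intros j. rewrite Rabs_mult. apply Rmult_le_compat_r; auto. apply Rabs_pos.
  apply sm_scal. apply sm_abs; auto. Qed.

Lemma sm_mul_bd (m a : seqZ) : bd m -> sm a -> sm (fun j => a j * m j).
Proof. intros Hm Ha. apply (sm_ext (fun j => m j * a j)). intros; ring. apply sm_bd_mul; auto. Qed.

Lemma sm_sq (a : seqZ) : l2Z a -> sm (fun j => a j ^ 2).
Proof. auto. Qed.

Lemma sm_cube (a : seqZ) : l2Z a -> sm (fun j => a j ^ 3).
Proof. intros H. apply (sm_ext (fun j => a j * (a j * a j))). intros; ring.
  apply sm_bd_mul. apply l2_bd; auto. apply sm_prod; auto. Qed.

Lemma l2_sq (a : seqZ) : l2Z a -> l2Z (fun j => a j ^ 2).
Proof. intros H. apply (l2_ext (fun j => a j * a j)). intros; ring. apply l2_bd_mul; auto. apply l2_bd; auto. Qed.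
Lemma bd_ext (a b : seqZ) : (forall j, a j = b j) -> bd a -> bd b.
Proof. intros H [M HM]. exists M. intros j. rewrite <- H. auto. Qed.

Lemma bd_sq (a : seqZ) : bd a -> bd (fun j => a j ^ 2).
Proof. intros H. apply (bd_ext (fun j => a j * a j)). intros; ring. apply bd_mult; auto. Qed.

Lemma bd_div (a : seqZ) (c : R) : bd a -> bd (fun j => a j / c).
Proof. intros H. apply (bd_ext (fun j => a j * (fun _ => / c) j)). intros; unfold Rdiv; auto.
  apply bd_mult; auto. apply bd_const. Qed.

Lemma l2_div (a : seqZ) (c : R) : l2Z a -> l2Z (fun j => a j / c).
Proof. intros H. apply (l2_ext (fun j => (/ c) * a j)). intros; unfold Rdiv; ring. apply l2_scal; auto. Qed.

Lemma sm_div (a : seqZ) (c : R) : sm a -> sm (fun j => a j / c).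
Proof. intros H. apply (sm_ext (fun j => (/ c) * a j)). intros; unfold Rdiv; ring. apply sm_scal; auto. Qed.

Lemma l2_id (a : seqZ) : l2Z a -> l2Z (fun j => a j).
Proof. auto. Qed.


Lemma l2_Dp dx a : l2Z a -> l2Z (Dp dx a).
Proof. intros H. unfold Dp. apply (l2_div (fun j => a (j+1)%Z - a j)). apply (l2_minus (fun j => a (j+1)%Z) a); auto. apply (l2_shiftk a 1); auto. Qed.
Lemma l2_Dm dx a : l2Z a -> l2Z (Dm dx a).
Proof. intros H. unfold Dm. apply (l2_div (fun j => a j - a (j-1)%Z)). apply (l2_minus a (fun j => a (j-1)%Z)); auto. apply (l2_shiftm a 1); auto. Qed.
Lemma l2_Dc dx a : l2Z a -> l2Z (Dc dx a).
Proof. intros H. unfold Dc. apply (l2_div (fun j => Dp dx a j + Dm dx a j)). apply (l2_plus (Dp dx a) (Dm dx a)). apply l2_Dp; auto. apply l2_Dm; auto. Qed.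
Lemma l2_D3 dx a : l2Z a -> l2Z (D3 dx a).
Proof. intros H. unfold D3. apply l2_Dp, l2_Dp, l2_Dm; auto. Qed.

Lemma l2_Atheta th dt dx a : l2Z a -> l2Z (Atheta th dt dx a).
Proof. intros H. unfold Atheta. apply (l2_plus a (fun j => th * dt * D3 dx a j)); auto.
  apply (l2_bd_mul (fun _ => th * dt) (D3 dx a)). apply bd_const. apply l2_D3; auto. Qed.

Lemma l2_abs (a : seqZ) : l2Z a -> l2Z (fun j => Rabs (a j)).
Proof. intros H. apply (l2_ext (fun j => Rabs (a j))); auto. unfold l2Z.
  apply (sm_ext (fun j => a j ^ 2)); auto. intros j. rewrite pow2_abs. auto. Qed.

Ltac bdt := match goal with
  | |- bd (fun j => ?f (j + ?k)%Z) => apply (bd_shiftk f k); bdt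
  | |- bd (fun j => ?f (j - ?k)%Z) => apply (bd_shiftm f k); bdt
  | |- bd (fun j => @?A j + @?B j) => apply (bd_plus A B); bdt
  | |- bd (fun j => @?A j - @?B j) => apply (bd_minus A B); bdt
  | |- bd (fun j => - @?A j) => apply (bd_opp A); bdt
  | |- bd (fun j => @?A j * @?B j) => apply (bd_mult A B); bdt
  | |- bd (fun j => @?A j ^ 2) => apply (bd_sq A); bdt
  | |- bd (fun j => @?A j / ?c) => apply (bd_div A c); bdt
  | |- bd (fun j => ?c) => apply (bd_const c)
  | |- _ => first [assumption | apply l2_bd; l2t]
  end
with l2t := match goal with
  | |- l2Z (fun j => Rabs (@?A j)) => apply (l2_abs A); l2t
  | |- l2Z (fun j => ?f (j + ?k)%Z) => apply (l2_shiftk f k); l2t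
  | |- l2Z (fun j => ?f (j - ?k)%Z) => apply (l2_shiftm f k); l2t
  | |- l2Z (fun j => @?A j + @?B j) => apply (l2_plus A B); l2t
  | |- l2Z (fun j => @?A j - @?B j) => apply (l2_minus A B); l2t
  | |- l2Z (fun j => - @?A j) => apply (l2_opp A); l2t
  | |- l2Z (fun j => @?A j / ?c) => apply (l2_div A c); l2t
  | |- l2Z (fun j => @?A j ^ 2) => apply (l2_sq A); l2t
  | |- l2Z (fun j => @?A j * @?B j) =>
      first [apply (l2_bd_mul A B); [bdt|l2t] | apply (l2_mul_bd B A); [bdt|l2t]]
  | |- l2Z (fun j => Dp ?dx ?a j) => apply (l2_Dp dx a); l2t
  | |- l2Z (fun j => Dm ?dx ?a j) => apply (l2_Dm dx a); l2t
  | |- l2Z (fun j => Dc ?dx ?a j) => apply (l2_Dc dx a); l2t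
  | |- l2Z (fun j => D3 ?dx ?a j) => apply (l2_D3 dx a); l2t
  | |- l2Z (Dp ?dx ?a) => apply (l2_Dp dx a); l2t
  | |- l2Z (Dm ?dx ?a) => apply (l2_Dm dx a); l2t
  | |- l2Z (Dc ?dx ?a) => apply (l2_Dc dx a); l2t
  | |- l2Z (D3 ?dx ?a) => apply (l2_D3 dx a); l2t
  | |- l2Z (fun j => Atheta ?th ?dt ?dx ?a j) => apply (l2_Atheta th dt dx a); l2t
  | |- l2Z (Atheta ?th ?dt ?dx ?a) => apply (l2_Atheta th dt dx a); l2t
  | |- _ => assumption
  end.

Ltac smt := match goal with
  | |- sm (fun j => ?f (j + ?k)%Z) => apply (sm_shiftk f k); smt
  | |- sm (fun j => ?f (j - ?k)%Z) => apply (sm_ext (fun j => f (j + - k)%Z)); [intros; f_equal; lia|apply (sm_shiftk f (- k)); smt]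
  | |- sm (fun j => @?A j + @?B j) => apply (sm_plus A B); smt
  | |- sm (fun j => @?A j - @?B j) => apply (sm_minus A B); smt
  | |- sm (fun j => - @?A j) => apply (sm_opp A); smt
  | |- sm (fun j => @?A j / ?c) => apply (sm_div A c); smt
  | |- sm (fun j => @?A j ^ 2) => apply (sm_sq A); l2t
  | |- sm (fun j => @?A j ^ 3) => apply (sm_cube A); l2t
  | |- sm (fun j => @?A j * @?B j) =>
      first [apply (sm_prod A B); l2t | apply (sm_bd_mul A B); [bdt|smt] | apply (sm_mul_bd B A); [bdt|smt]]
  | |- _ => assumption
  end.



Lemma sumZ_id (F G phi : seqZ) : sm F -> sm G -> sm phi ->
  (forall j, F j = G j + (phi (j + 1)%Z - phi j)) -> sumZ F = sumZ G.
Proof. intros HF HG Hp H. rewrite (sumZ_ext F (fun j => G j + (phi (j + 1)%Z - phi j))); auto.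
  rewrite sumZ_plus; auto. rewrite sumZ_tele; auto. ring.
  apply sm_minus; auto. apply sm_shiftk; auto. Qed.

Ltac normidx f := repeat match goal with |- context [f ?E] => progress ring_simplify E end.

Lemma ssq (a : seqZ) k : l2Z a -> sumZ (fun j => a (j + k)%Z * a (j + k)%Z) = sumZ (fun j => a j * a j).
Proof. intros H. apply (sumZ_shiftk (fun j => a j * a j)). apply sm_prod; auto. Qed.
Lemma ssqm (a : seqZ) k : l2Z a -> sumZ (fun j => a (j - k)%Z * a (j - k)%Z) = sumZ (fun j => a j * a j).
Proof. intros H. rewrite <- (ssq a (- k)) by auto. apply sumZ_ext. intros j. replace (j - k)%Z with (j + - k)%Z by lia. auto. Qed.
Ltac ssplit := repeat (first [rewrite sumZ_plus by smt | rewrite sumZ_minus by smt | rewrite sumZ_scal | rewrite sumZ_opp]).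

Lemma sumZ_sq_nonneg (a : seqZ) : l2Z a -> 0 <= sumZ (fun j => a j * a j).
Proof. intros H. apply sumZ_nonneg. apply sm_prod; auto. intros j. apply Rle_0_sqr. Qed.

Lemma CS (a b : seqZ) : l2Z a -> l2Z b ->
  sumZ (fun j => Rabs (a j) * Rabs (b j)) <= sqrt (sumZ (fun j => a j * a j)) * sqrt (sumZ (fun j => b j * b j)).
Proof. intros Ha Hb.
  set (A := sumZ (fun j => a j * a j)). set (B := sumZ (fun j => b j * b j)).
  set (X := sumZ (fun j => Rabs (a j) * Rabs (b j))).
  assert (HA : 0 <= A) by (apply sumZ_sq_nonneg; auto).
  assert (HB : 0 <= B) by (apply sumZ_sq_nonneg; auto).
  assert (Hk : forall k, 0 < k -> X <= / 2 * (k * A) + / (2 * k) * B).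
  { intros k Hk0. unfold X, A, B. rewrite <- (sumZ_scal k), <- !sumZ_scal, <- sumZ_plus by smt.
    apply sumZ_le; try smt. intros j.
    assert (0 <= (k * Rabs (a j) - Rabs (b j))^2) by apply pow2_ge_0.
    assert (E1 : a j * a j = Rabs (a j) ^ 2) by (rewrite pow2_abs; ring).
    assert (E2 : b j * b j = Rabs (b j) ^ 2) by (rewrite pow2_abs; ring).
    rewrite E1, E2. apply (Rmult_le_reg_l (2 * k)). lra.
    replace (2 * k * (/ 2 * (k * Rabs (a j) ^ 2) + / (2 * k) * Rabs (b j) ^ 2)) with (k^2 * Rabs (a j)^2 + Rabs (b j)^2) by (field; lra).
    nra. }
  assert (HX : 0 <= X). { unfold X. apply sumZ_nonneg. smt. intros j. apply Rmult_le_pos; apply Rabs_pos. }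
  destruct (Rlt_or_le 0 A) as [HA'|HA']; destruct (Rlt_or_le 0 B) as [HB'|HB'].
  - specialize (Hk (sqrt B / sqrt A)).
    assert (sA : 0 < sqrt A) by (apply sqrt_lt_R0; auto).
    assert (sB : 0 < sqrt B) by (apply sqrt_lt_R0; auto).
    assert (0 < sqrt B / sqrt A) by (apply Rdiv_lt_0_compat; auto).
    specialize (Hk H).
    assert (EA : A = sqrt A * sqrt A) by (rewrite sqrt_sqrt; lra).
    assert (EB : B = sqrt B * sqrt B) by (rewrite sqrt_sqrt; lra).
    remember (sqrt A) as sa. remember (sqrt B) as sb.
    replace (/ 2 * (sb / sa * A) + / (2 * (sb / sa)) * B) with (sa * sb) in Hk. auto.
    rewrite EA, EB. field. lra.
  - assert (B = 0) by lra. rewrite H, sqrt_0, Rmult_0_r.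
    destruct (Rle_or_lt X 0) as [|HX']; auto.
    specialize (Hk (X / (A + 1))). rewrite H in Hk.
    assert (0 < X / (A + 1)) by (apply Rdiv_lt_0_compat; lra).
    specialize (Hk H0). replace (/ 2 * (X / (A + 1) * A) + / (2 * (X / (A + 1))) * 0) with (X * (A / (A+1)) / 2) in Hk by (field; lra).
    assert (0 < 1 / (A + 1)) by (apply Rdiv_lt_0_compat; lra).
    replace (A / (A + 1)) with (1 - 1 / (A + 1)) in Hk by (field; lra). nra.
  - assert (A = 0) by lra. rewrite H, sqrt_0, Rmult_0_l.
    destruct (Rle_or_lt X 0) as [|HX']; auto.
    specialize (Hk ((B + 1) / X)). rewrite H in Hk.
    assert (0 < (B + 1) / X) by (apply Rdiv_lt_0_compat; lra).
    specialize (Hk H0). replace (/ 2 * ((B + 1) / X * 0) + / (2 * ((B + 1) / X)) * B) with (X * (B / (B+1)) / 2) in Hk by (field; lra).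
    assert (0 < 1 / (B + 1)) by (apply Rdiv_lt_0_compat; lra).
    replace (B / (B + 1)) with (1 - 1 / (B + 1)) in Hk by (field; lra). nra.
  - assert (A = 0) by lra. rewrite H, sqrt_0, Rmult_0_l.
    specialize (Hk 1 Rlt_0_1). rewrite H in Hk. assert (B = 0) by lra. rewrite H0 in Hk. lra.
Qed.

Lemma supnorm_le (a : seqZ) (M : R) : (forall j, Rabs (a j) <= M) -> supnorm a <= M.
Proof. intros H. unfold supnorm.
  destruct (Lub_Rbar_correct (fun r => exists j, r = Rabs (a j))) as [Hub Hlub].
  assert (Hle : Rbar_le (Lub_Rbar (fun r => exists j, r = Rabs (a j))) M).
  { apply Hlub. intros x [i ->]. simpl. apply H. }
  assert (Hge : Rbar_le (Rabs (a 0%Z)) (Lub_Rbar (fun r => exists j, r = Rabs (a j)))).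
  { apply Hub. exists 0%Z; auto. }
  destruct (Lub_Rbar (fun r => exists j, r = Rabs (a j))); simpl in *; try contradiction; auto. Qed.

Lemma nrm2 (dx : R) (x : seqZ) : 0 < dx -> l2Z x -> nrmD dx x ^ 2 = dx * sumZ (fun j => x j * x j).
Proof. intros Hdx Hx. unfold nrmD, ipD. rewrite pow2_sqrt. auto.
  apply Rmult_le_pos. lra. apply sumZ_sq_nonneg; auto. Qed.

Lemma abs2 (x U : R) : Rabs x <= U -> -U <= x <= U.
Proof. intros H. apply Rabs_le_between; auto. Qed.

Lemma sq_le_abs (x U : R) : Rabs x <= U -> x * x <= U * U.
Proof. intros H. apply abs2 in H. nra. Qed.

Lemma divle (A B d : R) : 0 < d -> A <= B -> A / d <= B / d.
Proof. intros Hd H. unfold Rdiv. apply Rmult_le_compat_r; auto. left; apply Rinv_0_lt_compat; auto. Qed.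

Lemma K (a b E : R) : Rabs a <= E -> Rabs b <= E -> Rabs ((a+b)^2*(a-b)) <= 4/3*E*(a*a+b*b).
Proof. intros Ha Hb.
  assert (HUV : Rabs (a+b) + Rabs (a-b) <= 2*E).
  { apply abs2 in Ha; apply abs2 in Hb.
    destruct (Rle_dec 0 (a+b)); destruct (Rle_dec 0 (a-b));
    [rewrite (Rabs_right (a+b)), (Rabs_right (a-b)) by lra
    |rewrite (Rabs_right (a+b)), (Rabs_left (a-b)) by lra
    |rewrite (Rabs_left (a+b)), (Rabs_right (a-b)) by lra
    |rewrite (Rabs_left (a+b)), (Rabs_left (a-b)) by lra]; lra. }
  set (u := Rabs (a+b)) in *. set (v := Rabs (a-b)) in *.
  assert (Hu : 0 <= u) by apply Rabs_pos. assert (Hv : 0 <= v) by apply Rabs_pos.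
  assert (Eq1 : Rabs ((a+b)^2*(a-b)) = u*u*v).
  { rewrite Rabs_mult. unfold u, v. rewrite <- RPow_abs. ring. }
  assert (Eq2 : a*a + b*b = (u*u + v*v)/2).
  { unfold u, v. replace (Rabs (a+b) * Rabs (a+b)) with (Rabs (a+b) ^ 2) by ring.
    replace (Rabs (a-b) * Rabs (a-b)) with (Rabs (a-b) ^ 2) by ring.
    rewrite !pow2_abs. field. }
  rewrite Eq1, Eq2.
  assert (0 <= u * (u - v)^2) by (apply Rmult_le_pos; auto; apply pow2_ge_0).
  assert (0 <= v^3) by (apply pow_le; auto).
  assert (0 <= u*u + v*v) by nra.
  assert (2/3*(u*u + v*v)*(2*E) >= 2/3*(u*u + v*v)*(u + v)) by nra.
  nra. Qed.

Lemma young_xy (x y P Q : R) : Rabs x <= y -> -(x * P * Q) <= y * (P*P + Q*Q) / 2.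
Proof. intros H. apply abs2 in H.
  assert (0 <= (y + x) * (P + Q)^2) by (apply Rmult_le_pos; [lra|apply pow2_ge_0]).
  assert (0 <= (y - x) * (P - Q)^2) by (apply Rmult_le_pos; [lra|apply pow2_ge_0]).
  nra. Qed.

Lemma young_xy' (x y P Q : R) : Rabs x <= y -> x * P * Q <= y * (P*P + Q*Q) / 2.
Proof. intros H. replace (x * P * Q) with (- ((-x) * P * Q)) by ring. apply young_xy. rewrite Rabs_Ropp; auto. Qed.

Lemma absmul_le (x y P : R) : Rabs x <= y -> x * (P * P) <= y * (P * P).
Proof. intros H. apply abs2 in H. assert (0 <= P*P) by nra. nra. Qed.

Lemma L1raw (x y z : R) : (x - 2*y + z)^2 <= 4*(x*x + 2*(y*y) + z*z).
Proof. assert (0 <= (x-z)^2) by apply pow2_ge_0. assert (0 <= (x+y)^2) by apply pow2_ge_0.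
  assert (0 <= (y+z)^2) by apply pow2_ge_0. nra. Qed.

Lemma tri2 (a b c U1 U2 : R) : Rabs (a - b) <= U1 -> Rabs (b - c) <= U2 -> Rabs (a - c) <= U1 + U2.
Proof. intros H1 H2. replace (a - c) with ((a - b) + (b - c)) by ring.
  eapply Rle_trans. apply Rabs_triang. lra. Qed.

Lemma RHSe_raw (a x0 xm xmm E : R) : Rabs a <= E -> Rabs x0 <= E -> Rabs xm <= E -> Rabs xmm <= E ->
  (- (x0 * ((a - 2*x0 + xm)*(a - 2*x0 + xm))) - xm * (a - 2*x0 + xm) * (x0 - 2*xm + xmm)
   + (a - 2*x0 + xm)*(a - 2*x0 + xm) * (5/6*(x0 - xm) + 1/6*(a - x0))
   + (a - 2*x0 + xm) * (x0 - 2*xm + xmm) * ((x0 - xm) + (xm - xmm)) / 2)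
  <= 11/3*E*((a - 2*x0 + xm)*(a - 2*x0 + xm)) + E*((x0 - 2*xm + xmm)*(x0 - 2*xm + xmm)).
Proof. intros Ha H0 Hm Hmm.
  set (P0 := a - 2*x0 + xm). set (Pm := x0 - 2*xm + xmm).
  assert (T1 : - (x0 * (P0*P0)) <= E * (P0*P0)).
  { replace (- (x0 * (P0*P0))) with ((-x0) * (P0*P0)) by ring. apply absmul_le. rewrite Rabs_Ropp; auto. }
  assert (T2 : - (xm * P0 * Pm) <= E * (P0*P0 + Pm*Pm) / 2) by (apply young_xy; auto).
  assert (T3 : (5/6*(x0 - xm) + 1/6*(a - x0)) * (P0*P0) <= 5/3*E * (P0*P0)).
  { apply absmul_le. apply abs2 in Ha; apply abs2 in H0; apply abs2 in Hm. apply Rabs_le. lra. }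
  assert (T4 : ((x0 - xmm)/2) * P0 * Pm <= E * (P0*P0 + Pm*Pm) / 2).
  { apply young_xy'. apply abs2 in H0; apply abs2 in Hmm. apply Rabs_le. lra. }
  replace ((x0 - xm) + (xm - xmm)) with (x0 - xmm) by ring.
  assert (0 <= P0*P0) by nra. assert (0 <= Pm*Pm) by nra.
  lra. Qed.

Lemma RHSw_raw (P0 Pm Qm wb wb1 wbm U UU : R) : Rabs wb <= U -> Rabs (wb1 - wb) <= UU -> Rabs (wb - wbm) <= UU ->
  (- (1/2) * wb * ((P0 + Pm)*(P0 + Pm)) + 1/2 * (P0*P0) * (wb1 - wb) - P0 * Qm * (wb - wbm))
  <= 1/2 * U * ((P0 + Pm)*(P0 + Pm)) + 1/2 * UU * (P0*P0) + UU * (Rabs P0 * Rabs Qm).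
Proof. intros H1 H2 H3.
  assert (T1 : - (1/2) * wb * ((P0 + Pm)*(P0 + Pm)) <= 1/2 * U * ((P0 + Pm)*(P0 + Pm))).
  { assert (-wb * ((P0+Pm)*(P0+Pm)) <= U * ((P0+Pm)*(P0+Pm))) by (apply absmul_le; rewrite Rabs_Ropp; auto). lra. }
  assert (T2 : (wb1 - wb) * (P0*P0) <= UU * (P0*P0)) by (apply absmul_le; auto).
  assert (T3 : - (P0 * Qm * (wb - wbm)) <= UU * (Rabs P0 * Rabs Qm)).
  { eapply Rle_trans. apply Rle_abs. rewrite Rabs_Ropp, !Rabs_mult.
    rewrite (Rmult_comm (Rabs P0 * Rabs Qm)). apply Rmult_le_compat_r; auto.
    apply Rmult_le_pos; apply Rabs_pos. }
  lra. Qed.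

Lemma B7raw (a b u1 u2 dx U Up E : R) : 0 < dx -> Rabs a <= E -> Rabs b <= E -> Rabs u1 <= U -> Rabs u2 <= U ->
  Rabs ((u1 - u2) / (2*dx)) <= Up ->
  ((u1*a - u2*b)/(2*dx) + (a*a - b*b)/(4*dx))^2
  <= (U+E)^2 * (((a-b)/(2*dx))*((a-b)/(2*dx))) + (U*Up/(2*dx) + Up*E/(3*dx) + Up^2/2) * (a*a + b*b).
Proof. intros Hdx Ha Hb Hu1 Hu2 HD.
  set (Dw := (u1 - u2) / (2*dx)) in *. set (De := (a-b)/(2*dx)).
  set (m := (u1+u2)/2). set (eb := (a+b)/2).
  assert (Eg : (u1*a - u2*b)/(2*dx) + (a*a - b*b)/(4*dx) = (m + eb) * De + eb * Dw).
  { unfold Dw, De, m, eb. field. lra. }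
  rewrite Eg.
  assert (Hal : Rabs (m + eb) <= U + E).
  { apply abs2 in Ha; apply abs2 in Hb; apply abs2 in Hu1; apply abs2 in Hu2. apply Rabs_le. unfold m, eb. lra. }
  assert (A1 : (m + eb)^2 * (De*De) <= (U+E)^2 * (De*De)).
  { apply Rmult_le_compat_r. nra. rewrite <- (pow2_abs (m+eb)). apply pow_incr. split; auto. apply Rabs_pos. }
  assert (Hm : Rabs m <= U).
  { apply abs2 in Hu1; apply abs2 in Hu2. apply Rabs_le. unfold m. lra. }
  assert (Eeb : eb * De = (a*a - b*b)/(4*dx)) by (unfold eb, De; field; lra).
  assert (Hab : Rabs (a*a - b*b) <= a*a + b*b).
  { apply Rabs_le. nra. }
  assert (A2 : 2 * (m * Dw) * (eb * De) <= U * Up * (a*a+b*b) / (2*dx)).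
  { rewrite Eeb. eapply Rle_trans. apply Rle_abs.
    rewrite !Rabs_mult. rewrite (Rabs_right 2) by lra.
    unfold Rdiv. rewrite Rabs_mult. rewrite (Rabs_right (/ (4*dx))) by (apply Rle_ge; left; apply Rinv_0_lt_compat; lra).
    assert (Rabs m * Rabs Dw <= U * Up) by (apply Rmult_le_compat; auto; apply Rabs_pos).
    assert (0 < / (4*dx)) by (apply Rinv_0_lt_compat; lra).
    assert (Rabs m * Rabs Dw * Rabs (a*a - b*b) <= U * Up * (a*a+b*b)).
    { apply Rmult_le_compat; auto. apply Rmult_le_pos; apply Rabs_pos. apply Rabs_pos. }
    replace (/ (2*dx)) with (2 * / (4*dx)) by (field; lra). nra. }
  assert (HK := K a b E Ha Hb).
  assert (Eeb2 : 2 * (eb * eb) * De * Dw = ((a+b)^2*(a-b)) * Dw / (4*dx)) by (unfold eb, De; field; lra).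
  assert (A3 : 2 * (eb * eb) * De * Dw <= Up * E * (a*a+b*b) / (3*dx)).
  { rewrite Eeb2. set (X := (a + b) ^ 2 * (a - b)) in *. eapply Rle_trans. apply Rle_abs. unfold Rdiv. rewrite !Rabs_mult.
    rewrite (Rabs_right (/ (4*dx))) by (apply Rle_ge; left; apply Rinv_0_lt_compat; lra).
    assert (0 < / (4*dx)) by (apply Rinv_0_lt_compat; lra).
    assert (Rabs X * Rabs Dw <= 4/3*E*(a*a+b*b) * Up).
    { apply Rmult_le_compat; auto; apply Rabs_pos. }
    replace (/ (3*dx)) with (4/3 * / (4*dx)) by (field; lra). nra. }
  assert (A4 : (eb*Dw)^2 <= Up^2/2 * (a*a+b*b)).
  { assert (Dw*Dw <= Up*Up) by (apply sq_le_abs; auto).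
    assert (eb*eb <= (a*a+b*b)/2). { assert (Ex : (a*a+b*b)/2 - eb*eb = (a-b)*(a-b)/4) by (unfold eb; field). assert (0 <= (a-b)*(a-b)) by apply Rle_0_sqr. lra. }
    assert (0 <= eb*eb) by nra. assert (0 <= Dw*Dw) by nra.
    replace ((eb*Dw)^2) with ((eb*eb)*(Dw*Dw)) by ring.
    replace (Up^2/2*(a*a+b*b)) with (((a*a+b*b)/2)*(Up*Up)) by (field; lra).
    apply Rmult_le_compat; auto. }
  replace (((m + eb) * De + eb * Dw)^2) with ((m + eb)^2 * (De*De) + 2 * (m * Dw) * (eb * De) + 2 * (eb * eb) * De * Dw + (eb*Dw)^2) by ring.
  unfold Rdiv in *. lra. Qed.

Lemma PQraw (P Q A T : R) : 0 <= P -> 0 <= Q -> 0 <= A -> 0 <= T -> Q*Q <= A*P -> P*P <= Q*T -> P*Q <= A*T.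
Proof. intros HP HQ HA HT H1 H2.
  assert (H3 : (P*Q)*(P*Q) <= (A*T)*(P*Q)).
  { replace ((P*Q)*(P*Q)) with ((P*P)*(Q*Q)) by ring. replace ((A*T)*(P*Q)) with ((Q*T)*(A*P)) by ring.
    apply Rmult_le_compat; auto; nra. }
  destruct (Rle_or_lt (P*Q) 0) as [H|H]. nra.
  apply (Rmult_le_reg_r (P*Q)); auto. Qed.

Lemma amgm_sqrt (A T k : R) : 0 <= A -> 0 <= T -> 2 * k * (sqrt A * sqrt T) <= A + k^2 * T.
Proof. intros HA HT. assert (0 <= (sqrt A - k * sqrt T)^2) by apply pow2_ge_0.
  rewrite <- (sqrt_sqrt A) at 2 by auto. rewrite <- (sqrt_sqrt T) at 2 by auto. nra. Qed.

Section Ids.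
Variables (dx : R) (e w : seqZ).
Hypothesis Hdx : 0 < dx.
Hypothesis He : l2Z e.
Hypothesis Hw : l2Z w.

Ltac pw := intros j; unfold D3, Dc, Dp, Dm; cbv beta; normidx e; normidx w; field; lra.

Lemma I1 : sumZ (fun j => e j * D3 dx e j) = sumZ (fun j => dx/2 * (Dp dx (Dm dx e) j * Dp dx (Dm dx e) j)).
Proof. apply (sumZ_id _ _ (fun j => ((1/2) * e (j - 1)%Z * e (j - 1)%Z + (-1) * e (j - 1)%Z * e j + (1) * e (j - 1)%Z * e (j + 1)%Z + (-1/2) * e j * e j) / dx^3)); [smt|smt|smt|pw]. Qed.

Lemma I2 : sumZ (fun j => e j * Dp dx (Dm dx e) j) = sumZ (fun j => - (Dp dx e j * Dp dx e j)).
Proof. apply (sumZ_id _ _ (fun j => ((-1) * e (j - 1)%Z * e j + (1) * e j * e j) / dx^2)); [smt|smt|smt|pw]. Qed.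

Lemma I3 : sumZ (fun j => D3 dx e j * Dp dx (Dm dx e) j) = sumZ (fun j => - (dx/2) * (D3 dx e j * D3 dx e j)).
Proof. apply (sumZ_id _ _ (fun j => ((1/2) * e (j - 1)%Z * e (j - 1)%Z + (-2) * e (j - 1)%Z * e j + (1) * e (j - 1)%Z * e (j + 1)%Z + (2) * e j * e j + (-2) * e j * e (j + 1)%Z + (1/2) * e (j + 1)%Z * e (j + 1)%Z) / dx^5)); [smt|smt|smt|pw]. Qed.

Lemma I4 : sumZ (fun j => Dp dx e j * Dp dx e j) = sumZ (fun j => Dc dx e j * Dc dx e j + dx^2/4 * (Dp dx (Dm dx e) j * Dp dx (Dm dx e) j)).
Proof. apply (sumZ_id _ _ (fun j => ((1/2) * e (j - 1)%Z * e (j - 1)%Z + (-1) * e (j - 1)%Z * e j + (1/2) * e j * e j) / dx^2)); [smt|smt|smt|pw]. Qed.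

Lemma I5 : sumZ (fun j => Dp dx (Dm dx e) j * Dp dx (Dm dx e) j) = sumZ (fun j => Dp dx (Dc dx e) j * Dp dx (Dc dx e) j + dx^2/4 * (D3 dx e j * D3 dx e j)).
Proof. apply (sumZ_id _ _ (fun j => ((-1/2) * e (j - 1)%Z * e (j - 1)%Z + (2) * e (j - 1)%Z * e j + (-1) * e (j - 1)%Z * e (j + 1)%Z + (-2) * e j * e j + (2) * e j * e (j + 1)%Z + (-1/2) * e (j + 1)%Z * e (j + 1)%Z) / dx^4)); [smt|smt|smt|pw]. Qed.

Lemma I6 : sumZ (fun j => e j * Dc dx (fun i => e i ^ 2 / 2) j) = sumZ (fun j => - (dx^2/12) * (Dp dx e j ^ 3)).
Proof. apply (sumZ_id _ _ (fun j => ((-1/2) * e (j - 1)%Z * e (j - 1)%Z * e j + (-1/6) * e j * e j * e j) / (-2 * dx))); [smt|smt|smt|pw]. Qed.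

Lemma Ip : sumZ (fun j => Dp dx (Dm dx e) j * Dp dx (Dm dx e) j) = sumZ (fun j => - (Dp dx e j * D3 dx e j)).
Proof. apply (sumZ_id _ _ (fun j => ((-1) * e (j - 1)%Z * e (j - 1)%Z + (3) * e (j - 1)%Z * e j + (-1) * e (j - 1)%Z * e (j + 1)%Z + (-2) * e j * e j + (1) * e j * e (j + 1)%Z) / dx^4)); [smt|smt|smt|pw]. Qed.

Lemma f10 : sumZ (fun j => e j * Dc dx (fun i => w i * e i) j) = sumZ (fun j => 1/2 * (e j * e (j+1)%Z * Dp dx w j)).
Proof. apply (sumZ_id _ _ (fun j => ((1) * e (j - 1)%Z * e j * w (j - 1)%Z) / (2*dx))); [smt|smt|smt|pw]. Qed.

Lemma f11 : sumZ (fun j => Dp dx (Dm dx e) j * Dc dx (fun i => w i * e i) j) = sumZ (fun j => (e j * e (j+2)%Z * (w (j+2)%Z - w j) + 2 * (e j * e (j+1)%Z * (w j - w (j+1)%Z))) / (2 * dx^3)).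
Proof. apply (sumZ_id _ _ (fun j => ((1) * e (j - 1)%Z * e (j - 1)%Z * w (j - 1)%Z + (-2) * e (j - 1)%Z * e j * w (j - 1)%Z + (1) * e (j - 1)%Z * e (j + 1)%Z * w (j - 1)%Z + (-1) * e (j - 1)%Z * e (j + 1)%Z * w (j + 1)%Z + (1) * e j * e j * w j) / (2*dx^3))); [smt|smt|smt|pw]. Qed.

Lemma f12 : sumZ (fun j => Dp dx (Dm dx e) j * Dc dx (fun i => e i ^ 2 / 2) j - 1/6 * (Dp dx e j ^ 3)) = sumZ (fun j => - ((e (j+2)%Z - e j) ^ 3) / (12 * dx^3)).
Proof. apply (sumZ_id _ _ (fun j => ((1/4) * e (j - 1)%Z * e (j - 1)%Z * e (j - 1)%Z + (-1/2) * e (j - 1)%Z * e (j - 1)%Z * e j + (1/4) * e (j - 1)%Z * e (j - 1)%Z * e (j + 1)%Z + (-1/4) * e (j - 1)%Z * e (j + 1)%Z * e (j + 1)%Z + (1/6) * e j * e j * e j + (1/12) * e (j + 1)%Z * e (j + 1)%Z * e (j + 1)%Z) / dx^3)); [smt|smt|smt|pw]. Qed.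

Lemma f14a : sumZ (fun j => 2 * (D3 dx e j * Dc dx (fun i => e i ^ 2 / 2) j)) = sumZ (fun j => (- (e j * ((e (j+1)%Z - 2*e j + e (j-1)%Z)*(e (j+1)%Z - 2*e j + e (j-1)%Z))) - e (j-1)%Z * (e (j+1)%Z - 2*e j + e (j-1)%Z) * (e j - 2*e (j-1)%Z + e (j-2)%Z) + (e (j+1)%Z - 2*e j + e (j-1)%Z)*(e (j+1)%Z - 2*e j + e (j-1)%Z) * (5/6*(e j - e (j-1)%Z) + 1/6*(e (j+1)%Z - e j)) + (e (j+1)%Z - 2*e j + e (j-1)%Z) * (e j - 2*e (j-1)%Z + e (j-2)%Z) * ((e j - e (j-1)%Z) + (e (j-1)%Z - e (j-2)%Z)) / 2) / dx^4).
Proof. apply (sumZ_id _ _ (fun j => ((-1/2) * e (j - 2)%Z * e (j - 2)%Z * e (j - 1)%Z + (1) * e (j - 2)%Z * e (j - 2)%Z * e j + (-1/2) * e (j - 2)%Z * e (j - 2)%Z * e (j + 1)%Z + (2/3) * e (j - 1)%Z * e (j - 1)%Z * e (j - 1)%Z + (-2) * e (j - 1)%Z * e (j - 1)%Z * e j + (5/2) * e (j - 1)%Z * e j * e j + (-5/3) * e j * e j * e j + (1/2) * e j * e j * e (j + 1)%Z) / dx^4)); [smt|smt|smt|pw]. Qed.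

Lemma f14b : sumZ (fun j => 2 * (D3 dx e j * (((w (j+1)%Z + w (j-1)%Z)/2) * Dc dx e j))) = sumZ (fun j => (- (1/2) * ((w (j+1)%Z + w (j-1)%Z)/2) * (((e (j+1)%Z - 2*e j + e (j-1)%Z) + (e j - 2*e (j-1)%Z + e (j-2)%Z))*((e (j+1)%Z - 2*e j + e (j-1)%Z) + (e j - 2*e (j-1)%Z + e (j-2)%Z))) + 1/2 * ((e (j+1)%Z - 2*e j + e (j-1)%Z)*(e (j+1)%Z - 2*e j + e (j-1)%Z)) * (((w (j+2)%Z + w j)/2) - ((w (j+1)%Z + w (j-1)%Z)/2)) - (e (j+1)%Z - 2*e j + e (j-1)%Z) * (e j - e (j-2)%Z) * (((w (j+1)%Z + w (j-1)%Z)/2) - ((w j + w (j-2)%Z)/2))) / dx^4).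
Proof. apply (sumZ_id _ _ (fun j => ((-1/4) * e (j - 2)%Z * e (j - 2)%Z * w (j - 1)%Z + (-1/4) * e (j - 2)%Z * e (j - 2)%Z * w (j + 1)%Z + (-1/2) * e (j - 2)%Z * e (j - 1)%Z * w (j - 2)%Z + (1) * e (j - 2)%Z * e (j - 1)%Z * w (j - 1)%Z + (-1/2) * e (j - 2)%Z * e (j - 1)%Z * w j + (1) * e (j - 2)%Z * e (j - 1)%Z * w (j + 1)%Z + (1) * e (j - 2)%Z * e j * w (j - 2)%Z + (-1/2) * e (j - 2)%Z * e j * w (j - 1)%Z + (1) * e (j - 2)%Z * e j * w j + (-1/2) * e (j - 2)%Z * e j * w (j + 1)%Z + (-1/2) * e (j - 2)%Z * e (j + 1)%Z * w (j - 2)%Z + (-1/2) * e (j - 2)%Z * e (j + 1)%Z * w j + (-1) * e (j - 1)%Z * e (j - 1)%Z * w (j - 1)%Z + (-1) * e (j - 1)%Z * e (j - 1)%Z * w (j + 1)%Z + (1/2) * e (j - 1)%Z * e j * w (j - 2)%Z + (1) * e (j - 1)%Z * e j * w (j - 1)%Z + (1/2) * e (j - 1)%Z * e j * w j + (1) * e (j - 1)%Z * e j * w (j + 1)%Z + (-1) * e j * e j * w (j - 2)%Z + (-1/4) * e j * e j * w (j - 1)%Z + (-1) * e j * e j * w j + (-1/4) * e j * e j * w (j + 1)%Z + (1/2) * e j * e (j + 1)%Z * w (j - 2)%Z + (1/2) * e j * e (j + 1)%Z * w j) / dx^4)); [smt|smt|smt|pw]. Qed.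

End Ids.

Section Bnd.
Variables (dx U Up E : R) (e w : seqZ).
Hypothesis Hdx : 0 < dx.
Hypothesis He : l2Z e.
Hypothesis Hw : l2Z w.
Hypothesis HU : forall j, Rabs (w j) <= U.
Hypothesis HUp : forall j, Rabs (Dp dx w j) <= Up.
Hypothesis HE : forall j, Rabs (e j) <= E.

Lemma Hdw j : Rabs (w (j+1)%Z - w j) <= dx * Up.
Proof. specialize (HUp j). unfold Dp in HUp.
  replace (w (j+1)%Z - w j) with (dx * ((w (j + 1)%Z - w j) / dx)) by (field; lra).
  rewrite Rabs_mult, Rabs_right by lra. apply Rmult_le_compat_l; lra. Qed.

Ltac unf := unfold D3, Dc, Dp, Dm; cbv beta; normidx e; normidx w.

Lemma B1 : sumZ (fun j => Dp dx (Dm dx e) j * Dp dx (Dm dx e) j) <= 16 / dx^4 * sumZ (fun j => e j * e j).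
Proof.
  apply Rle_trans with (sumZ (fun j => 4/dx^4 * (e (j+1)%Z * e (j+1)%Z + 2 * (e j * e j) + e (j-1)%Z * e (j-1)%Z))).
  - apply sumZ_le; [smt|smt|]. intros j.
    assert (Eq : Dp dx (Dm dx e) j * Dp dx (Dm dx e) j = (e (j+1)%Z - 2*e j + e (j-1)%Z)^2 / dx^4) by (unf; field; lra).
    rewrite Eq. replace (4 / dx ^ 4 * (e (j + 1)%Z * e (j + 1)%Z + 2 * (e j * e j) + e (j - 1)%Z * e (j - 1)%Z))
      with ((4 * (e (j + 1)%Z * e (j + 1)%Z + 2 * (e j * e j) + e (j - 1)%Z * e (j - 1)%Z)) / dx^4) by (field; lra).
    apply divle. apply pow_lt; lra. apply L1raw.
  - apply Req_le. ssplit. rewrite (ssq e 1) by auto. rewrite (ssqm e 1) by auto. unfold Rdiv; ring.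
Qed.

Lemma B2 : sumZ (fun j => Dc dx (fun i => w i * e i) j * Dc dx (fun i => w i * e i) j) <= U^2 / dx^2 * sumZ (fun j => e j * e j).
Proof.
  apply Rle_trans with (sumZ (fun j => U^2/(2*dx^2) * (e (j+1)%Z * e (j+1)%Z + e (j-1)%Z * e (j-1)%Z))).
  - apply sumZ_le; [smt|smt|]. intros j.
    assert (Eq : Dc dx (fun i => w i * e i) j * Dc dx (fun i => w i * e i) j = (w (j+1)%Z * e (j+1)%Z - w (j-1)%Z * e (j-1)%Z)^2 / (4 * dx^2)) by (unf; field; lra).
    rewrite Eq. replace (U ^ 2 / (2 * dx ^ 2) * (e (j + 1)%Z * e (j + 1)%Z + e (j - 1)%Z * e (j - 1)%Z))
      with ((2 * U^2 * (e (j + 1)%Z * e (j + 1)%Z + e (j - 1)%Z * e (j - 1)%Z)) / (4 * dx^2)) by (field; lra).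
    apply divle. nra.
    pose proof (sq_le_abs _ _ (HU (j+1)%Z)). pose proof (sq_le_abs _ _ (HU (j-1)%Z)).
    assert (0 <= e (j+1)%Z * e (j+1)%Z) by nra. assert (0 <= e (j-1)%Z * e (j-1)%Z) by nra.
    assert (w (j + 1)%Z * e (j + 1)%Z * (w (j + 1)%Z * e (j + 1)%Z) <= U^2 * (e (j+1)%Z * e (j+1)%Z)) by nra.
    assert (w (j - 1)%Z * e (j - 1)%Z * (w (j - 1)%Z * e (j - 1)%Z) <= U^2 * (e (j-1)%Z * e (j-1)%Z)) by nra.
    assert (0 <= (w (j + 1)%Z * e (j + 1)%Z + w (j - 1)%Z * e (j - 1)%Z)^2) by apply pow2_ge_0.
    nra.
  - apply Req_le. ssplit. rewrite (ssq e 1) by auto. rewrite (ssqm e 1) by auto. field; lra.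
Qed.

Lemma B3 : sumZ (fun j => Dc dx (fun i => e i ^ 2 / 2) j * Dc dx (fun i => e i ^ 2 / 2) j) <= E^2 * sumZ (fun j => Dc dx e j * Dc dx e j).
Proof.
  rewrite <- sumZ_scal. apply sumZ_le; [smt|smt|]. intros j.
  assert (Eq : Dc dx (fun i => e i ^ 2 / 2) j = (e (j+1)%Z + e (j-1)%Z)/2 * Dc dx e j) by (unf; field; lra).
  rewrite Eq.
  assert (Hb : Rabs ((e (j+1)%Z + e (j-1)%Z)/2) <= E).
  { pose proof (HE (j+1)%Z); pose proof (HE (j-1)%Z). apply abs2 in H; apply abs2 in H0. apply Rabs_le. lra. }
  pose proof (sq_le_abs _ _ Hb). assert (0 <= Dc dx e j * Dc dx e j) by nra. nra.
Qed.

Lemma B4 : - (Up/2) * sumZ (fun j => e j * e j) <= sumZ (fun j => e j * Dc dx (fun i => w i * e i) j).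
Proof. rewrite (f10 dx e w Hdx He Hw).
  apply Rle_trans with (sumZ (fun j => - (Up/4) * (e j * e j + e (j+1)%Z * e (j+1)%Z))).
  - apply Req_le. ssplit. rewrite (ssq e 1) by auto. field.
  - apply sumZ_le; [smt|smt|]. intros j.
    pose proof (young_xy (Dp dx w j) Up (e j) (e (j+1)%Z) (HUp j)). lra.
Qed.

Lemma Hdw2 j : Rabs (w (j+2)%Z - w j) <= 2 * (dx * Up).
Proof. replace (2 * (dx*Up)) with (dx*Up + dx*Up) by ring. apply (tri2 _ (w (j+1)%Z)).
  replace (j+2)%Z with (j+1+1)%Z by lia. apply Hdw. apply Hdw. Qed.

Lemma B5 : - (2 * Up / dx^2) * sumZ (fun j => e j * e j) <= sumZ (fun j => Dp dx (Dm dx e) j * Dc dx (fun i => w i * e i) j).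
Proof. rewrite (f11 dx e w Hdx He Hw).
  apply Rle_trans with (sumZ (fun j => - (Up / (2*dx^2)) * (2 * (e j * e j) + e (j+2)%Z * e (j+2)%Z + e (j+1)%Z * e (j+1)%Z))).
  - apply Req_le. ssplit. rewrite (ssq e 1) by auto. rewrite (ssq e 2) by auto. field. lra.
  - apply sumZ_le; [smt|smt|]. intros j.
    pose proof (young_xy (w (j+2)%Z - w j) (2*(dx*Up)) (e j) (e (j+2)%Z) (Hdw2 j)) as H1.
    assert (Rabs (w j - w (j+1)%Z) <= dx*Up) by (rewrite Rabs_minus_sym; apply Hdw).
    pose proof (young_xy (w j - w (j+1)%Z) (dx*Up) (e j) (e (j+1)%Z) H) as H2.
    replace (- (Up / (2 * dx ^ 2)) * (2 * (e j * e j) + e (j + 2)%Z * e (j + 2)%Z + e (j + 1)%Z * e (j + 1)%Z))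
      with ((- (dx*Up) * (2 * (e j * e j) + e (j + 2)%Z * e (j + 2)%Z + e (j + 1)%Z * e (j + 1)%Z)) / (2*dx^3)) by (field; lra).
    apply divle. apply Rmult_lt_0_compat; [lra|apply pow_lt; lra]. lra.
Qed.

Lemma B6 : - (2 * E / (3 * dx)) * sumZ (fun j => Dc dx e j * Dc dx e j)
  <= sumZ (fun j => Dp dx (Dm dx e) j * Dc dx (fun i => e i ^ 2 / 2) j - 1/6 * (Dp dx e j ^ 3)).
Proof. rewrite (f12 dx e Hdx He).
  apply Rle_trans with (sumZ (fun j => - (2 * E / (3 * dx)) * (Dc dx e (j+1)%Z * Dc dx e (j+1)%Z))).
  - apply Req_le. rewrite sumZ_scal. rewrite (ssq (Dc dx e) 1) by l2t. auto.
  - apply sumZ_le; [smt|smt|]. intros j.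
    assert (Eq : Dc dx e (j+1)%Z = (e (j+2)%Z - e j) / (2*dx)) by (unf; field; lra).
    rewrite Eq. set (z := e (j+2)%Z - e j).
    assert (Hz : Rabs z <= 2 * E).
    { unfold z. pose proof (HE (j+2)%Z); pose proof (HE j). apply abs2 in H; apply abs2 in H0. apply Rabs_le. lra. }
    apply abs2 in Hz. assert (0 <= z*z) by nra. assert (z^3 <= 2*E*(z*z)) by nra.
    replace (- (2 * E / (3 * dx)) * (z / (2 * dx) * (z / (2 * dx)))) with (- (2*E*(z*z)) / (12 * dx^3)) by (field; lra).
    replace (- z ^ 3 / (12 * dx ^ 3)) with ((- z^3) / (12 * dx^3)) by (field; lra).
    apply divle. apply Rmult_lt_0_compat; [lra|apply pow_lt; lra]. lra.
Qed.

Lemma HDw j : Rabs (Dc dx w j) <= Up.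
Proof. assert (Eq : Dc dx w j = (Dp dx w j + Dp dx w (j-1)%Z) / 2) by (unf; field; lra).
  rewrite Eq. pose proof (HUp j); pose proof (HUp (j-1)%Z). apply abs2 in H; apply abs2 in H0. apply Rabs_le. lra. Qed.

Lemma B7 : sumZ (fun j => (Dc dx (fun i => w i * e i) j + Dc dx (fun i => e i ^ 2 / 2) j) * (Dc dx (fun i => w i * e i) j + Dc dx (fun i => e i ^ 2 / 2) j))
  <= (U+E)^2 * sumZ (fun j => Dc dx e j * Dc dx e j) + (U*Up/dx + 2*Up*E/(3*dx) + Up^2) * sumZ (fun j => e j * e j).
Proof.
  apply Rle_trans with (sumZ (fun j => (U+E)^2 * (Dc dx e j * Dc dx e j) + (U*Up/(2*dx) + Up*E/(3*dx) + Up^2/2) * (e (j+1)%Z * e (j+1)%Z + e (j-1)%Z * e (j-1)%Z))).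
  - apply sumZ_le; [smt|smt|]. intros j.
    assert (Eq1 : Dc dx (fun i => w i * e i) j + Dc dx (fun i => e i ^ 2 / 2) j
      = (w (j+1)%Z * e (j+1)%Z - w (j-1)%Z * e (j-1)%Z)/(2*dx) + (e (j+1)%Z * e (j+1)%Z - e (j-1)%Z * e (j-1)%Z)/(4*dx)) by (unf; field; lra).
    assert (Eq2 : Dc dx e j = (e (j+1)%Z - e (j-1)%Z) / (2*dx)) by (unf; field; lra).
    assert (Eq3 : Dc dx w j = (w (j+1)%Z - w (j-1)%Z) / (2*dx)) by (unf; field; lra).
    rewrite Eq1, Eq2. pose proof (HDw j) as HD. rewrite Eq3 in HD.
    pose proof (B7raw (e (j+1)%Z) (e (j-1)%Z) (w (j+1)%Z) (w (j-1)%Z) dx U Up E Hdx (HE _) (HE _) (HU _) (HU _) HD).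
    replace ((((w (j+1)%Z * e (j+1)%Z - w (j-1)%Z * e (j-1)%Z)/(2*dx) + (e (j+1)%Z * e (j+1)%Z - e (j-1)%Z * e (j-1)%Z)/(4*dx))) *
             (((w (j+1)%Z * e (j+1)%Z - w (j-1)%Z * e (j-1)%Z)/(2*dx) + (e (j+1)%Z * e (j+1)%Z - e (j-1)%Z * e (j-1)%Z)/(4*dx))))
      with (((w (j+1)%Z * e (j+1)%Z - w (j-1)%Z * e (j-1)%Z)/(2*dx) + (e (j+1)%Z * e (j+1)%Z - e (j-1)%Z * e (j-1)%Z)/(4*dx))^2) by ring.
    lra.
  - apply Req_le. ssplit. rewrite (ssq e 1) by auto. rewrite (ssqm e 1) by auto. field. lra.
Qed.

Lemma B8e : sumZ (fun j => (- (e j * ((e (j+1)%Z - 2*e j + e (j-1)%Z)*(e (j+1)%Z - 2*e j + e (j-1)%Z))) - e (j-1)%Z * (e (j+1)%Z - 2*e j + e (j-1)%Z) * (e j - 2*e (j-1)%Z + e (j-2)%Z) + (e (j+1)%Z - 2*e j + e (j-1)%Z)*(e (j+1)%Z - 2*e j + e (j-1)%Z) * (5/6*(e j - e (j-1)%Z) + 1/6*(e (j+1)%Z - e j)) + (e (j+1)%Z - 2*e j + e (j-1)%Z) * (e j - 2*e (j-1)%Z + e (j-2)%Z) * ((e j - e (j-1)%Z) + (e (j-1)%Z - e (j-2)%Z)) / 2) / dx^4) <= 14/3 * E * sumZ (fun j => Dp dx (Dm dx e) j * Dp dx (Dm dx e) j).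
Proof.
  apply Rle_trans with (sumZ (fun j => 11/3*E*(Dp dx (Dm dx e) j * Dp dx (Dm dx e) j) + E * (Dp dx (Dm dx e) (j-1)%Z * Dp dx (Dm dx e) (j-1)%Z))).
  - apply sumZ_le; [smt|smt|]. intros j.
    assert (EqL : Dp dx (Dm dx e) j = (e (j+1)%Z - 2*e j + e (j-1)%Z)/dx^2) by (unf; field; lra).
    assert (EqLm : Dp dx (Dm dx e) (j-1)%Z = (e j - 2*e (j-1)%Z + e (j-2)%Z)/dx^2) by (unf; field; lra).
    rewrite EqL, EqLm.
    pose proof (RHSe_raw (e (j+1)%Z) (e j) (e (j-1)%Z) (e (j-2)%Z) E (HE _) (HE _) (HE _) (HE _)) as H.
    set (P0 := e (j+1)%Z - 2*e j + e (j-1)%Z) in *. set (Pm := e j - 2*e (j-1)%Z + e (j-2)%Z) in *.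
    apply Rle_trans with ((11/3*E*(P0*P0) + E*(Pm*Pm)) / dx^4).
    apply divle. apply pow_lt; lra. exact H.
    right. field. lra.
  - apply Req_le. ssplit. rewrite (ssqm (Dp dx (Dm dx e)) 1) by l2t. lra.
Qed.

Lemma B8w : sumZ (fun j => (- (1/2) * ((w (j+1)%Z + w (j-1)%Z)/2) * (((e (j+1)%Z - 2*e j + e (j-1)%Z) + (e j - 2*e (j-1)%Z + e (j-2)%Z))*((e (j+1)%Z - 2*e j + e (j-1)%Z) + (e j - 2*e (j-1)%Z + e (j-2)%Z))) + 1/2 * ((e (j+1)%Z - 2*e j + e (j-1)%Z)*(e (j+1)%Z - 2*e j + e (j-1)%Z)) * (((w (j+2)%Z + w j)/2) - ((w (j+1)%Z + w (j-1)%Z)/2)) - (e (j+1)%Z - 2*e j + e (j-1)%Z) * (e j - e (j-2)%Z) * (((w (j+1)%Z + w (j-1)%Z)/2) - ((w j + w (j-2)%Z)/2))) / dx^4) <= 2 * U * sumZ (fun j => Dp dx (Dc dx e) j * Dp dx (Dc dx e) j)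
  + dx * Up / 2 * sumZ (fun j => Dp dx (Dm dx e) j * Dp dx (Dm dx e) j)
  + 2 * Up * sumZ (fun j => Rabs (Dp dx (Dm dx e) j) * Rabs (Dc dx e (j-1)%Z)).
Proof.
  apply Rle_trans with (sumZ (fun j => 2 * U * (Dp dx (Dc dx e) (j-1)%Z * Dp dx (Dc dx e) (j-1)%Z)
     + dx * Up / 2 * (Dp dx (Dm dx e) j * Dp dx (Dm dx e) j) + 2 * Up * (Rabs (Dp dx (Dm dx e) j) * Rabs (Dc dx e (j-1)%Z)))).
  - apply sumZ_le; [smt|smt|]. intros j.
    assert (EqL : Dp dx (Dm dx e) j = (e (j+1)%Z - 2*e j + e (j-1)%Z)/dx^2) by (unf; field; lra).
    assert (EqD : Dp dx (Dc dx e) (j-1)%Z = ((e (j+1)%Z - 2*e j + e (j-1)%Z) + (e j - 2*e (j-1)%Z + e (j-2)%Z))/(2*dx^2)) by (unf; field; lra).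
    assert (EqQ : Dc dx e (j-1)%Z = (e j - e (j-2)%Z)/(2*dx)) by (unf; field; lra).
    rewrite EqL, EqD, EqQ.
    assert (Hwb : Rabs ((w (j+1)%Z + w (j-1)%Z)/2) <= U).
    { pose proof (HU (j+1)%Z); pose proof (HU (j-1)%Z). apply abs2 in H; apply abs2 in H0. apply Rabs_le. lra. }
    assert (Hwb1 : Rabs ((w (j+2)%Z + w j)/2 - (w (j+1)%Z + w (j-1)%Z)/2) <= dx*Up).
    { pose proof (Hdw (j+1)%Z); pose proof (Hdw (j-1)%Z). replace (j+1+1)%Z with (j+2)%Z in H by lia.
      replace (j-1+1)%Z with j in H0 by lia. apply abs2 in H; apply abs2 in H0. apply Rabs_le. lra. }
    assert (Hwb2 : Rabs ((w (j+1)%Z + w (j-1)%Z)/2 - (w j + w (j-2)%Z)/2) <= dx*Up).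
    { pose proof (Hdw j); pose proof (Hdw (j-2)%Z). replace (j-2+1)%Z with (j-1)%Z in H0 by lia.
      apply abs2 in H; apply abs2 in H0. apply Rabs_le. lra. }
    pose proof (RHSw_raw (e (j+1)%Z - 2*e j + e (j-1)%Z) (e j - 2*e (j-1)%Z + e (j-2)%Z) (e j - e (j-2)%Z)
       ((w (j+1)%Z + w (j-1)%Z)/2) ((w (j+2)%Z + w j)/2) ((w j + w (j-2)%Z)/2) U (dx*Up) Hwb Hwb1 Hwb2) as H.
    set (P0 := e (j+1)%Z - 2*e j + e (j-1)%Z) in *. set (Pm := e j - 2*e (j-1)%Z + e (j-2)%Z) in *.
    set (Qm := e j - e (j-2)%Z) in *.
    apply Rle_trans with ((1/2 * U * ((P0 + Pm)*(P0 + Pm)) + 1/2 * (dx*Up) * (P0*P0) + (dx*Up) * (Rabs P0 * Rabs Qm)) / dx^4).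
    apply divle. apply pow_lt; lra. exact H.
    right. unfold Rdiv. rewrite !Rabs_mult, !Rabs_inv. rewrite (Rabs_right (dx^2)) by (apply Rle_ge, pow_le; lra).
    rewrite (Rabs_right (2*dx)) by lra. field. lra.
  - apply Req_le. ssplit. rewrite (ssqm (Dp dx (Dc dx e)) 1) by l2t. ring.
Qed.

Lemma B8full : sumZ (fun j => 2 * (D3 dx e j * (Dc dx (fun i => w i * e i) j + Dc dx (fun i => e i ^ 2 / 2) j)))
  <= 2 * U * sumZ (fun j => Dp dx (Dc dx e) j * Dp dx (Dc dx e) j)
   + (14/3 * E + dx * Up / 2) * sumZ (fun j => Dp dx (Dm dx e) j * Dp dx (Dm dx e) j)
   + 2 * Up * sumZ (fun j => Rabs (Dp dx (Dm dx e) j) * Rabs (Dc dx e (j-1)%Z))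
   + sumZ (fun j => 2 * (D3 dx e j * ((e (j+1)%Z + e (j-1)%Z)/2 * Dc dx w j))).
Proof.
  rewrite (sumZ_ext _ (fun j => 2 * (D3 dx e j * (((w (j+1)%Z + w (j-1)%Z)/2) * Dc dx e j))
     + 2 * (D3 dx e j * ((e (j+1)%Z + e (j-1)%Z)/2 * Dc dx w j)) + 2 * (D3 dx e j * Dc dx (fun i => e i ^ 2 / 2) j))).
  2:{ intros j. unfold Dc, Dp, Dm. cbv beta. normidx e; normidx w. field. lra. }
  rewrite sumZ_plus by smt. rewrite sumZ_plus by smt.
  rewrite (f14b dx e w Hdx He Hw), (f14a dx e Hdx He).
  pose proof B8w. pose proof B8e. lra.
Qed.

Lemma B9 (k : R) : k * sumZ (fun j => 2 * (D3 dx e j * ((e (j+1)%Z + e (j-1)%Z)/2 * Dc dx w j)))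
  <= Up * (k^2 * sumZ (fun j => D3 dx e j * D3 dx e j) + sumZ (fun j => e j * e j)).
Proof.
  rewrite <- sumZ_scal.
  apply Rle_trans with (sumZ (fun j => Up * (k^2 * (D3 dx e j * D3 dx e j)) + Up / 2 * (e (j+1)%Z * e (j+1)%Z + e (j-1)%Z * e (j-1)%Z))).
  - apply sumZ_le; [smt|smt|]. intros j.
    set (T := D3 dx e j). set (eb := (e (j+1)%Z + e (j-1)%Z)/2). set (D := Dc dx w j).
    assert (HD : Rabs D <= Up) by apply HDw.
    assert (Heb : eb * eb <= (e (j+1)%Z * e (j+1)%Z + e (j-1)%Z * e (j-1)%Z) / 2).
    { assert (Ex : (e (j+1)%Z * e (j+1)%Z + e (j-1)%Z * e (j-1)%Z) / 2 - eb*eb = (e (j+1)%Z - e (j-1)%Z)*(e (j+1)%Z - e (j-1)%Z)/4) by (unfold eb; field).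
      assert (0 <= (e (j+1)%Z - e (j-1)%Z)*(e (j+1)%Z - e (j-1)%Z)) by apply Rle_0_sqr. lra. }
    assert (H1 : D * ((k*T) * eb) * 2 <= Up * ((k*T)*(k*T) + eb*eb)).
    { pose proof (young_xy' D Up (k*T) eb HD). lra. }
    assert (0 <= Up) by (eapply Rle_trans; [apply Rabs_pos|apply HD]).
    assert (Up * (eb*eb) <= Up * ((e (j+1)%Z * e (j+1)%Z + e (j-1)%Z * e (j-1)%Z) / 2)) by (apply Rmult_le_compat_l; auto).
    replace (k * (2 * (T * (eb * D)))) with (D * ((k*T) * eb) * 2) by ring.
    replace (Up * (k ^ 2 * (T * T))) with (Up * ((k*T)*(k*T))) by ring. lra.
  - apply Req_le. ssplit. rewrite (ssq e 1) by auto. rewrite (ssqm e 1) by auto. field.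
Qed.

Lemma CSint : sumZ (fun j => Rabs (Dp dx (Dm dx e) j) * Rabs (Dc dx e (j-1)%Z))
  <= sqrt (sumZ (fun j => e j * e j)) * sqrt (sumZ (fun j => D3 dx e j * D3 dx e j)).
Proof.
  set (Se := sumZ (fun j => e j * e j)). set (ST := sumZ (fun j => D3 dx e j * D3 dx e j)).
  set (SL := sumZ (fun j => Dp dx (Dm dx e) j * Dp dx (Dm dx e) j)).
  set (SQ := sumZ (fun j => Dp dx e j * Dp dx e j)). set (SR := sumZ (fun j => Dc dx e j * Dc dx e j)).
  assert (HSe : 0 <= Se) by (apply sumZ_sq_nonneg; auto).
  assert (HST : 0 <= ST) by (apply sumZ_sq_nonneg; l2t).
  assert (HSL : 0 <= SL) by (apply sumZ_sq_nonneg; l2t).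
  assert (HSQ : 0 <= SQ) by (apply sumZ_sq_nonneg; l2t).
  assert (HSR : 0 <= SR) by (apply sumZ_sq_nonneg; l2t).
  assert (C1 := CS (Dp dx (Dm dx e)) (fun j => Dc dx e (j-1)%Z) ltac:(l2t) ltac:(l2t)).
  cbv beta in C1. rewrite (ssqm (Dc dx e) 1) in C1 by l2t. fold SL SR in C1.
  assert (I4' := I4 dx e Hdx He). rewrite sumZ_plus in I4' by smt. rewrite sumZ_scal in I4'. fold SQ SR SL in I4'.
  assert (HRQ : SR <= SQ) by (assert (0 <= dx^2/4*SL) by (apply Rmult_le_pos; [apply Rmult_le_pos; [apply pow2_ge_0|lra]|auto]); lra).
  assert (I2' := I2 dx e Hdx He). rewrite sumZ_opp in I2'. fold SQ in I2'.
  assert (C2 := CS e (Dp dx (Dm dx e)) He ltac:(l2t)). fold Se SL in C2.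
  assert (HQ1 : SQ <= sqrt Se * sqrt SL).
  { eapply Rle_trans; [|apply C2].
    assert (E1 : SQ = sumZ (fun j => - (e j * Dp dx (Dm dx e) j))) by (rewrite sumZ_opp; lra). rewrite E1.
    apply sumZ_le; try smt.
    intros j. rewrite <- Rabs_mult. rewrite <- Rabs_Ropp. apply Rle_abs. }
  assert (Ip' := Ip dx e Hdx He). rewrite sumZ_opp in Ip'. fold SL in Ip'.
  assert (C3 := CS (Dp dx e) (D3 dx e) ltac:(l2t) ltac:(l2t)). fold SQ ST in C3.
  assert (HQ2 : SL <= sqrt SQ * sqrt ST).
  { eapply Rle_trans; [|apply C3].
    assert (E1 : SL = sumZ (fun j => - (Dp dx e j * D3 dx e j))) by (rewrite sumZ_opp; lra). rewrite E1.
    apply sumZ_le; try smt.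
    intros j. rewrite <- Rabs_mult. rewrite <- Rabs_Ropp. apply Rle_abs. }
  assert (SQ*SQ <= Se*SL).
  { rewrite <- (sqrt_sqrt Se), <- (sqrt_sqrt SL) by auto.
    replace (sqrt Se * sqrt Se * (sqrt SL * sqrt SL)) with ((sqrt Se * sqrt SL)*(sqrt Se * sqrt SL)) by ring.
    apply Rmult_le_compat; auto. }
  assert (SL*SL <= SQ*ST).
  { rewrite <- (sqrt_sqrt SQ), <- (sqrt_sqrt ST) by auto.
    replace (sqrt SQ * sqrt SQ * (sqrt ST * sqrt ST)) with ((sqrt SQ * sqrt ST)*(sqrt SQ * sqrt ST)) by ring.
    apply Rmult_le_compat; auto. }
  assert (HPQ := PQraw SL SQ Se ST HSL HSQ HSe HST H H0).
  eapply Rle_trans. apply C1. rewrite <- !sqrt_mult by auto. apply sqrt_le_1_alt.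
  apply Rle_trans with (SL * SQ); auto. apply Rmult_le_compat_l; auto.
Qed.
End Bnd.

Lemma div_nonneg (a b : R) : 0 <= a -> 0 < b -> 0 <= a / b.
Proof. intros. unfold Rdiv. apply Rmult_le_pos; auto. left; apply Rinv_0_lt_compat; auto. Qed.

Lemma dtUp2 (dt dx U Up : R) : 0 < dt -> 0 < dx -> 0 <= Up -> Up * dx <= 2 * U ->
  dt * Up^2 <= U^2 + (dt/dx) * U * Up / 2 + (dt/dx)^2 * Up^2.
Proof. intros Hdt Hdx HUp H.
  set (t := dt / dx^2). set (u := Up * dx / 2).
  assert (Ht : 0 < t) by (unfold t; apply Rdiv_lt_0_compat; [lra|apply pow_lt; lra]).
  assert (Hu : 0 <= u) by (unfold u; apply Rmult_le_pos; [apply Rmult_le_pos|]; lra).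
  assert (HuU : u <= U) by (unfold u; lra).
  assert (E1 : dt * Up^2 = 4 * t * u^2) by (unfold t, u; field; lra).
  assert (E2 : (dt/dx) * U * Up / 2 = t * U * u) by (unfold t, u; field; lra).
  assert (E3 : (dt/dx)^2 * Up^2 = 4 * t^2 * u^2) by (unfold t, u; field; lra).
  rewrite E1, E2, E3.
  assert (t * u * u <= t * U * u) by (apply Rmult_le_compat_r; auto; apply Rmult_le_compat_l; lra).
  assert (u*u <= U*U) by (apply Rmult_le_compat; lra).
  assert (0 <= (2*t - 3/4)^2 + 7/16) by (assert (0 <= (2*t-3/4)^2) by apply pow2_ge_0; lra).
  assert (0 <= u*u) by nra.
  assert (0 <= u*u * ((2*t - 3/4)^2 + 7/16)) by (apply Rmult_le_pos; auto).
  nra. Qed.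

Lemma final_arith (c th dt dx U Up E X sq : R)
 (Se ST SL SR SM SQ S3 Seps Sg Seh1 STg SLh1 SLh2c Sh1 Sh2 Xabs STB Sa SeT SeL STL Seh2 : R) :
 0 < c -> 0 < dt -> 0 < dx -> 1/2 <= th <= 1 -> 0 <= U -> 0 <= Up -> 0 <= E -> 7*E <= X -> 0 <= sq -> Up*dx <= 2*U ->
 0 <= Se -> 0 <= ST -> 0 <= SL -> 0 <= SR -> 0 <= SM ->
 SeT = dx/2*SL -> SeL = -SQ -> STL = -(dx/2)*ST -> SQ = SR + dx^2/4*SL -> SL = SM + dx^2/4*ST -> Seh2 = -(dx^2/12)*S3 ->
 Sa = Se + 2*th*dt*SeT + th^2*dt^2*ST ->
 SL <= 16/dx^4*Se -> Sh1 <= U^2/dx^2*Se -> Sh2 <= E^2*SR -> -(Up/2)*Se <= Seh1 -> -(2*Up/dx^2)*Se <= SLh1 ->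
 -(2*E/(3*dx))*SR <= SLh2c -> Sg <= (U+E)^2*SR + (U*Up/dx + 2*Up*E/(3*dx) + Up^2)*Se ->
 STg <= 2*U*SM + (14/3*E + dx*Up/2)*SL + 2*Up*Xabs + STB ->
 (1-th)*dt*STB <= Up*(((1-th)*dt)^2*ST + Se) ->
 2*((1-th)*dt)*Up*Xabs <= Up*(Se + ((1-th)*dt)^2*ST) ->
 (1+dt)*Se + (-(1+dt)*2*(1-th)*dt)*SeT + ((1+dt)*(1-th)^2*dt^2)*ST + ((c*dx/2)^2*dt^2)*SL + dt^2*Sg
 + (c*dt*dx)*SeL + (-(c*dt*dx*(1-th)*dt))*STL + (-2*dt)*Seh1 + (-2*dt)*Seh2 + ((1-th)*dt^2)*STg
 + (-(c*dt^2*dx))*SLh1 + (-(c*dt^2*dx))*SLh2c + (-(c*dt^2*dx/6))*S3 + (dt*(1+4*(dt/dx)+dt))*Seps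
 + (c^2*dt^2*dx^3/8)*SL + (dt^2*dx)*Sh1 + (dt^2*dx)*Sh2
 <= Sa*(1 + dt*(U^2*(1+dt/dx) + Up*(7 + dt/dx*(2*c + 2/3*E + 3/2*U)) + Up^2*(sq + dt^2/dx^2) + 1 + 2*c^2*dt/dx))
   + dt*Seps*(1 + 4*(dt/dx) + dt) + dt*((dx - c*dt)*(dx/6*S3) - (dx-c*dt)*c*SQ)
   + dt^2*(U^2 + (E^2*(1+dx) + 2*E*U + 2*c/3*E) - c^2)*SR
   + dt*(2*(1-th)*dt*(U + E + 1/2 + X/2) - dx)*SM
   + dt*(dt*((1-2*th) + (1-th)*dx^2/2*(c + 1/2 + X/2)) - dx^3/4)*ST.
Proof.
 intros Hc Hdt Hdx Hth HU HUp HE HX Hsq HUpdx HSe HST HSL HSR HSM I1 I2 I3 I4 I5 I6 Ia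
   B1 B2 B3 B4 B5 B6 B7 B8 B9 B10.
 set (G1 := dt^2 * ((U+E)^2*SR + (U*Up/dx + 2*Up*E/(3*dx) + Up^2)*Se - Sg)).
 set (G2 := 2*dt*(Seh1 + Up/2*Se)).
 set (G3 := (1-th)*dt^2*(2*U*SM + (14/3*E + dx*Up/2)*SL + 2*Up*Xabs + STB - STg)).
 set (G4 := c*dt^2*dx*(SLh1 + 2*Up/dx^2*Se)).
 set (G5 := c*dt^2*dx*(SLh2c + 2*E/(3*dx)*SR)).
 set (G6 := c^2*dt^2*dx^3/8*(16/dx^4*Se - SL)).
 set (G7 := dt^2*dx*(U^2/dx^2*Se - Sh1)).
 set (G8 := dt^2*dx*(E^2*SR - Sh2)).
 set (G9 := dt*(Up*(((1-th)*dt)^2*ST + Se) - (1-th)*dt*STB)).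
 set (G10 := dt*(Up*(Se + ((1-th)*dt)^2*ST) - 2*((1-th)*dt)*Up*Xabs)).
 set (R1 := dt^2*dx*SL + (2*th-1)*dt^3*ST).
 set (R2 := (1-th)*dt^2*((2*E + 1 + X - 14/3*E)*SM + dx^2/4*(1 + X - 14/3*E)*ST)).
 set (Ea1m := U^2*(1+dt/dx) + Up*(dt/dx*(2*c + 2/3*E + 3/2*U)) + Up^2*(sq + dt^2/dx^2) + 2*c^2*dt/dx).
 set (R3a := dt*Ea1m*(th*dt*dx*SL + th^2*dt^2*ST)).
 set (R3b := dt*(U^2 + 4*Up + (dt/dx)*U*Up/2 + Up^2*sq + Up^2*(dt^2/dx^2) - dt*Up^2)*Se).
 set (R3c := dt*Up*(7*th*dt*dx - (1-th)*dt*dx/2)*SL).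
 set (R3d := dt*Up*(7*th^2*dt^2 - 2*(1-th)^2*dt^2)*ST).
 assert (Hdx0 : dx <> 0) by lra.
 assert (Hsum : forall L R : R, R - L = G1+G2+G3+G4+G5+G6+G7+G8+G9+G10+R1+R2+R3a+R3b+R3c+R3d ->
   0 <= G1+G2+G3+G4+G5+G6+G7+G8+G9+G10+R1+R2+R3a+R3b+R3c+R3d -> L <= R) by (intros; lra).
 apply Hsum.
 - assert (ESM : SM = SL - dx^2/4*ST) by lra.
   unfold G1, G2, G3, G4, G5, G6, G7, G8, G9, G10, R1, R2, R3a, R3b, R3c, R3d, Ea1m.
   rewrite Ia, I1, I2, I3, I6, I4, ESM. field. auto.
 - assert (Hdt2 : 0 <= dt^2) by (apply pow2_ge_0).
   assert (Hs : 0 <= 1 - th) by lra.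
   assert (Hlam : 0 <= dt/dx) by (apply div_nonneg; lra).
   assert (0 <= G1) by (unfold G1; apply Rmult_le_pos; [auto|lra]).
   assert (0 <= G2) by (unfold G2; apply Rmult_le_pos; lra).
   assert (0 <= G3) by (unfold G3; apply Rmult_le_pos; [apply Rmult_le_pos; auto|lra]).
   assert (0 <= G4) by (unfold G4; apply Rmult_le_pos; [apply Rmult_le_pos; [apply Rmult_le_pos|]; lra|]; unfold Rdiv in *; lra).
   assert (0 <= G5) by (unfold G5; apply Rmult_le_pos; [apply Rmult_le_pos; [apply Rmult_le_pos|]; lra|]; unfold Rdiv in *; lra).
   assert (0 <= G6).
   { unfold G6. apply Rmult_le_pos; [|lra]. unfold Rdiv. apply Rmult_le_pos; [|lra].
     apply Rmult_le_pos; [apply Rmult_le_pos|]; try apply pow2_ge_0. apply pow_le; lra. }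
   assert (0 <= G7) by (unfold G7; apply Rmult_le_pos; [apply Rmult_le_pos; lra|lra]).
   assert (0 <= G8) by (unfold G8; apply Rmult_le_pos; [apply Rmult_le_pos; lra|lra]).
   assert (0 <= G9) by (unfold G9; apply Rmult_le_pos; lra).
   assert (0 <= G10) by (unfold G10; apply Rmult_le_pos; lra).
   assert (0 <= R1).
   { unfold R1. apply Rplus_le_le_0_compat. apply Rmult_le_pos; [apply Rmult_le_pos|]; lra.
     apply Rmult_le_pos; [apply Rmult_le_pos|]; try lra. apply pow_le; lra. }
   assert (0 <= R2).
   { unfold R2. apply Rmult_le_pos. apply Rmult_le_pos; lra. apply Rplus_le_le_0_compat.
     apply Rmult_le_pos; lra. apply Rmult_le_pos; [apply Rmult_le_pos|]; try lra. apply Rmult_le_pos; [apply pow2_ge_0|lra]. }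
   assert (HEa : 0 <= Ea1m).
   { unfold Ea1m. assert (0 <= U^2) by apply pow2_ge_0. assert (0 <= Up^2) by apply pow2_ge_0.
     assert (0 <= dt^2/dx^2) by (apply div_nonneg; [apply pow2_ge_0|apply pow_lt; lra]).
     assert (0 <= c^2) by apply pow2_ge_0.
     assert (0 <= 2*c^2*dt/dx) by (unfold Rdiv; apply Rmult_le_pos; [apply Rmult_le_pos; lra|]; left; apply Rinv_0_lt_compat; lra).
     assert (0 <= U^2*(1+dt/dx)) by (apply Rmult_le_pos; lra).
     assert (0 <= Up*(dt/dx*(2*c + 2/3*E + 3/2*U))) by (apply Rmult_le_pos; [lra|apply Rmult_le_pos; lra]).
     assert (0 <= Up^2*(sq + dt^2/dx^2)) by (apply Rmult_le_pos; lra). lra. }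
   assert (0 <= R3a).
   { unfold R3a. apply Rmult_le_pos. apply Rmult_le_pos; lra. apply Rplus_le_le_0_compat.
     apply Rmult_le_pos; [apply Rmult_le_pos; [apply Rmult_le_pos|]|]; lra.
     apply Rmult_le_pos; [apply Rmult_le_pos|]; try lra. apply pow2_ge_0. }
   assert (0 <= R3b).
   { unfold R3b. apply Rmult_le_pos; [|lra]. apply Rmult_le_pos; [lra|].
     pose proof (dtUp2 dt dx U Up Hdt Hdx HUp HUpdx) as Hd2.
     replace ((dt/dx)^2) with (dt^2/dx^2) in Hd2 by (field; lra).
     assert (0 <= Up^2*sq) by (apply Rmult_le_pos; [apply pow2_ge_0|lra]). lra. }
   assert (0 <= R3c).
   { unfold R3c. apply Rmult_le_pos; [|lra]. apply Rmult_le_pos; [apply Rmult_le_pos; lra|].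
     assert (0 <= dt*dx) by (apply Rmult_le_pos; lra). nra. }
   assert (0 <= R3d).
   { unfold R3d. apply Rmult_le_pos; [|lra]. apply Rmult_le_pos; [apply Rmult_le_pos; lra|].
     assert (0 <= dt^2) by apply pow2_ge_0. assert (0 <= 7*th^2 - 2*(1-th)^2) by nra. nra. }
   lra.
Qed.

Lemma PWraw (c th dt dx e0 T L h1 h2 D eps : R) : 0 < dt -> 0 < dx ->
 (e0 + th*dt*T - dt*(T + (h1 + h2) - c*dx/2*L + eps)) * (e0 + th*dt*T - dt*(T + (h1 + h2) - c*dx/2*L + eps))
 <= (1+dt)*(e0*e0) + (-(1+dt)*2*(1-th)*dt)*(e0*T) + ((1+dt)*(1-th)^2*dt^2)*(T*T) + ((c*dx/2)^2*dt^2)*(L*L)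
  + dt^2*((h1+h2)*(h1+h2)) + (c*dt*dx)*(e0*L) + (-(c*dt*dx*(1-th)*dt))*(T*L) + (-2*dt)*(e0*h1) + (-2*dt)*(e0*h2)
  + ((1-th)*dt^2)*(2*(T*(h1+h2))) + (-(c*dt^2*dx))*(L*h1) + (-(c*dt^2*dx))*(L*h2 - 1/6*D^3)
  + (-(c*dt^2*dx/6))*(D^3) + (dt*(1+4*(dt/dx)+dt))*(eps*eps)
  + (c^2*dt^2*dx^3/8)*(L*L) + (dt^2*dx)*(h1*h1) + (dt^2*dx)*(h2*h2).
Proof. intros Hdt Hdx.
  set (Be := e0 - (1-th)*dt*T).
  match goal with |- ?A <= ?B => assert (Eq : B - A = dt*(Be+eps)^2 + 2*(dt^2/dx)*(eps + c*dx^2*L/4)^2 + (dt^2/dx)*(eps - dx*h1)^2 + (dt^2/dx)*(eps - dx*h2)^2) end.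
  { unfold Be. field. lra. }
  assert (0 <= dt*(Be+eps)^2) by (apply Rmult_le_pos; [lra|apply pow2_ge_0]).
  assert (0 <= dt^2/dx) by (apply div_nonneg; [apply pow2_ge_0|lra]).
  assert (0 <= 2*(dt^2/dx)*(eps + c*dx^2*L/4)^2) by (apply Rmult_le_pos; [lra|apply pow2_ge_0]).
  assert (0 <= (dt^2/dx)*(eps - dx*h1)^2) by (apply Rmult_le_pos; [lra|apply pow2_ge_0]).
  assert (0 <= (dt^2/dx)*(eps - dx*h2)^2) by (apply Rmult_le_pos; [lra|apply pow2_ge_0]).
  lra. Qed.

Lemma Xq_ge (gamma dx E : R) : 0 < dx -> 0 <= E -> 7 * E <= Xq gamma dx E.
Proof. intros Hdx HE. unfold Xq.
  assert (Hr : 0 < Rpower dx (1/2 - gamma)) by (unfold Rpower; apply exp_pos).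
  replace (gamma - 1/2) with (- (1/2 - gamma)) by ring. rewrite Rpower_Ropp.
  set (r := Rpower dx (1/2 - gamma)) in *.
  assert (0 <= (r - 3*E)^2) by apply pow2_ge_0.
  assert (r + 9*E^2 * / r - 6*E = (r - 3*E)^2 / r) by (field; lra).
  assert (0 <= (r - 3*E)^2 / r) by (apply div_nonneg; lra). lra. Qed.

Lemma core (c th gamma dt dx : R) (e w eps : seqZ) :
  0 < c -> 0 < dt -> 0 < dx -> 1/2 <= th <= 1 -> l2Z e -> l2Z w -> l2Z eps ->
  let U := supnorm w in let Up := supnorm (Dp dx w) in let E := supnorm e in
  nrmD dx (fun j => Atheta th dt dx e j - dt * (D3 dx e j + (Dc dx (fun i => w i * e i) j + Dc dx (fun i => e i ^ 2 / 2) j) - c * dx / 2 * Dp dx (Dm dx e) j + eps j)) ^ 2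
  <= nrmD dx (Atheta th dt dx e) ^ 2 * (1 + dt * Ea c dt dx U Up E) + dt * nrmD dx eps ^ 2 * (1 + 4 * (dt / dx) + dt)
   + dt * ipD dx (Bb c dt dx (Dp dx e)) (fun j => Dp dx e j ^ 2) + dt ^ 2 * Bc c dx U E * nrmD dx (Dc dx e) ^ 2
   + dt * Be th gamma dt dx U E * nrmD dx (Dp dx (Dc dx e)) ^ 2 + dt * Bf c th gamma dt dx E * nrmD dx (D3 dx e) ^ 2.
Proof.
  intros Hc Hdt Hdx Hth He Hw Heps U Up E.
  assert (HUb : forall j, Rabs (w j) <= U) by (apply supnorm_ge; apply l2_bd; auto).
  assert (HUpb : forall j, Rabs (Dp dx w j) <= Up) by (apply supnorm_ge; apply l2_bd; l2t).
  assert (HEb : forall j, Rabs (e j) <= E) by (apply supnorm_ge; apply l2_bd; auto).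
  assert (HU : 0 <= U) by (apply supnorm_nonneg; apply l2_bd; auto).
  assert (HUp : 0 <= Up) by (apply supnorm_nonneg; apply l2_bd; l2t).
  assert (HE : 0 <= E) by (apply supnorm_nonneg; apply l2_bd; auto).
  assert (HUpdx : Up * dx <= 2 * U).
  { assert (Up <= 2 * U / dx).
    { apply supnorm_le. intros j. unfold Dp. unfold Rdiv. rewrite Rabs_mult, Rabs_inv, (Rabs_right dx) by lra.
      apply Rmult_le_compat_r. left; apply Rinv_0_lt_compat; lra.
      unfold Rminus. eapply Rle_trans. apply Rabs_triang. rewrite Rabs_Ropp. pose proof (HUb (j+1)%Z). pose proof (HUb j). lra. }
    apply (Rmult_le_compat_r dx) in H; [|lra]. replace (2 * U / dx * dx) with (2 * U) in H by (field; lra). lra. }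
  assert (HX := Xq_ge gamma dx E Hdx HE).
  set (X := Xq gamma dx E) in *.
  rewrite !nrm2 by (auto; l2t).
  unfold ipD.
  set (SY := sumZ (fun j => (Atheta th dt dx e j - dt * (D3 dx e j + (Dc dx (fun i => w i * e i) j + Dc dx (fun i => e i ^ 2 / 2) j) - c * dx / 2 * Dp dx (Dm dx e) j + eps j)) *
             (Atheta th dt dx e j - dt * (D3 dx e j + (Dc dx (fun i => w i * e i) j + Dc dx (fun i => e i ^ 2 / 2) j) - c * dx / 2 * Dp dx (Dm dx e) j + eps j)))).
  assert (HPB : SY <= sumZ (fun j =>
    (1+dt)*(e j * e j) + (-(1+dt)*2*(1-th)*dt)*(e j * D3 dx e j) + ((1+dt)*(1-th)^2*dt^2)*(D3 dx e j * D3 dx e j)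
    + ((c*dx/2)^2*dt^2)*(Dp dx (Dm dx e) j * Dp dx (Dm dx e) j)
    + dt^2*((Dc dx (fun i => w i * e i) j + Dc dx (fun i => e i ^ 2 / 2) j) * (Dc dx (fun i => w i * e i) j + Dc dx (fun i => e i ^ 2 / 2) j))
    + (c*dt*dx)*(e j * Dp dx (Dm dx e) j) + (-(c*dt*dx*(1-th)*dt))*(D3 dx e j * Dp dx (Dm dx e) j)
    + (-2*dt)*(e j * Dc dx (fun i => w i * e i) j) + (-2*dt)*(e j * Dc dx (fun i => e i ^ 2 / 2) j)
    + ((1-th)*dt^2)*(2*(D3 dx e j * (Dc dx (fun i => w i * e i) j + Dc dx (fun i => e i ^ 2 / 2) j)))
    + (-(c*dt^2*dx))*(Dp dx (Dm dx e) j * Dc dx (fun i => w i * e i) j)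
    + (-(c*dt^2*dx))*(Dp dx (Dm dx e) j * Dc dx (fun i => e i ^ 2 / 2) j - 1/6 * Dp dx e j ^ 3)
    + (-(c*dt^2*dx/6))*(Dp dx e j ^ 3) + (dt*(1+4*(dt/dx)+dt))*(eps j * eps j)
    + (c^2*dt^2*dx^3/8)*(Dp dx (Dm dx e) j * Dp dx (Dm dx e) j)
    + (dt^2*dx)*(Dc dx (fun i => w i * e i) j * Dc dx (fun i => w i * e i) j)
    + (dt^2*dx)*(Dc dx (fun i => e i ^ 2 / 2) j * Dc dx (fun i => e i ^ 2 / 2) j))).
  { unfold SY. apply sumZ_le; [smt|smt|]. intros j. unfold Atheta.
    apply (PWraw c th dt dx (e j) (D3 dx e j) (Dp dx (Dm dx e) j) (Dc dx (fun i => w i * e i) j) (Dc dx (fun i => e i ^ 2 / 2) j) (Dp dx e j) (eps j) Hdt Hdx). }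
  Ltac ssplitH H := repeat (first [rewrite sumZ_plus in H by smt | rewrite sumZ_minus in H by smt | rewrite sumZ_scal in H | rewrite sumZ_opp in H]).
  ssplitH HPB.
  assert (I1' := I1 dx e Hdx He). ssplitH I1'.
  assert (I2' := I2 dx e Hdx He). ssplitH I2'.
  assert (I3' := I3 dx e Hdx He). ssplitH I3'.
  assert (I4' := I4 dx e Hdx He). ssplitH I4'.
  assert (I5' := I5 dx e Hdx He). ssplitH I5'.
  assert (I6' := I6 dx e Hdx He). ssplitH I6'.
  assert (Ia : sumZ (fun j => Atheta th dt dx e j * Atheta th dt dx e j)
     = sumZ (fun j => e j * e j) + 2*th*dt*sumZ (fun j => e j * D3 dx e j) + th^2*dt^2*sumZ (fun j => D3 dx e j * D3 dx e j)).
  { rewrite (sumZ_ext _ (fun j => e j * e j + (2*th*dt)*(e j * D3 dx e j) + (th^2*dt^2)*(D3 dx e j * D3 dx e j))).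
    ssplit. auto. intros j. unfold Atheta. ring. }
  assert (HBb : sumZ (fun j => Bb c dt dx (Dp dx e) j * Dp dx e j ^ 2)
     = (dx - c*dt)*(dx/6*sumZ (fun j => Dp dx e j ^ 3)) - (dx - c*dt)*c*sumZ (fun j => Dp dx e j * Dp dx e j)).
  { rewrite (sumZ_ext _ (fun j => (dx - c*dt)*(dx/6*(Dp dx e j ^ 3)) - ((dx - c*dt)*c)*(Dp dx e j * Dp dx e j))).
    ssplit. auto. intros j. unfold Bb. ring. }
  assert (B1' := B1 dx e Hdx He).
  assert (B2' := B2 dx U e w Hdx He Hw HUb).
  assert (B3' := B3 dx E e Hdx He HEb).
  assert (B4' := B4 dx Up e w Hdx He Hw HUpb).
  assert (B5' := B5 dx Up e w Hdx He Hw HUpb).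
  assert (B6' := B6 dx E e Hdx He HEb). ssplitH B6'.
  assert (B7' := B7 dx U Up E e w Hdx He Hw HUb HUpb HEb).
  assert (B8' := B8full dx U Up E e w Hdx He Hw HUb HUpb HEb). ssplitH B8'.
  assert (B9' := B9 dx Up e w Hdx He Hw HUpb ((1-th)*dt)). ssplitH B9'.
  assert (CS' := CSint dx e Hdx He).
  assert (Hnn : forall x : seqZ, l2Z x -> 0 <= sumZ (fun j => x j * x j)) by (intros; apply sumZ_sq_nonneg; auto).
  assert (HSe := Hnn e He).
  assert (HST := Hnn (D3 dx e) ltac:(l2t)).
  assert (HSL := Hnn (Dp dx (Dm dx e)) ltac:(l2t)).
  assert (HSR := Hnn (Dc dx e) ltac:(l2t)).
  assert (HSM := Hnn (Dp dx (Dc dx e)) ltac:(l2t)).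
  assert (HCS : 2*((1-th)*dt)*Up*sumZ (fun j => Rabs (Dp dx (Dm dx e) j) * Rabs (Dc dx e (j - 1)%Z))
      <= Up*(sumZ (fun j => e j * e j) + ((1-th)*dt)^2*sumZ (fun j => D3 dx e j * D3 dx e j))).
  { pose proof (amgm_sqrt _ _ ((1-th)*dt) HSe HST).
    assert (0 <= (1-th)*dt) by (apply Rmult_le_pos; lra).
    assert (2*((1-th)*dt)*sumZ (fun j => Rabs (Dp dx (Dm dx e) j) * Rabs (Dc dx e (j - 1)%Z))
            <= 2*((1-th)*dt)*(sqrt (sumZ (fun j => e j * e j)) * sqrt (sumZ (fun j => D3 dx e j * D3 dx e j))))
      by (apply Rmult_le_compat_l; lra).
    replace (2*((1-th)*dt)*Up*sumZ (fun j => Rabs (Dp dx (Dm dx e) j) * Rabs (Dc dx e (j - 1)%Z)))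
      with (Up * (2*((1-th)*dt)*sumZ (fun j => Rabs (Dp dx (Dm dx e) j) * Rabs (Dc dx e (j - 1)%Z)))) by ring.
    apply Rmult_le_compat_l; auto. lra. }
  pose proof (final_arith c th dt dx U Up E X (sqrt 2 * sqrt dt / sqrt dx)
    (sumZ (fun j => e j * e j)) (sumZ (fun j => D3 dx e j * D3 dx e j)) (sumZ (fun j => Dp dx (Dm dx e) j * Dp dx (Dm dx e) j))
    (sumZ (fun j => Dc dx e j * Dc dx e j)) (sumZ (fun j => Dp dx (Dc dx e) j * Dp dx (Dc dx e) j))
    (sumZ (fun j => Dp dx e j * Dp dx e j)) (sumZ (fun j => Dp dx e j ^ 3)) (sumZ (fun j => eps j * eps j))
    (sumZ (fun j => (Dc dx (fun i => w i * e i) j + Dc dx (fun i => e i ^ 2 / 2) j) * (Dc dx (fun i => w i * e i) j + Dc dx (fun i => e i ^ 2 / 2) j)))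
    (sumZ (fun j => e j * Dc dx (fun i => w i * e i) j))
    (2 * sumZ (fun j => D3 dx e j * (Dc dx (fun i => w i * e i) j + Dc dx (fun i => e i ^ 2 / 2) j)))
    (sumZ (fun j => Dp dx (Dm dx e) j * Dc dx (fun i => w i * e i) j))
    (sumZ (fun j => Dp dx (Dm dx e) j * Dc dx (fun i => e i ^ 2 / 2) j) - 1/6 * sumZ (fun j => Dp dx e j ^ 3))
    (sumZ (fun j => Dc dx (fun i => w i * e i) j * Dc dx (fun i => w i * e i) j))
    (sumZ (fun j => Dc dx (fun i => e i ^ 2 / 2) j * Dc dx (fun i => e i ^ 2 / 2) j))
    (sumZ (fun j => Rabs (Dp dx (Dm dx e) j) * Rabs (Dc dx e (j - 1)%Z)))
    (2 * sumZ (fun j => D3 dx e j * ((e (j + 1)%Z + e (j - 1)%Z) / 2 * Dc dx w j)))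
    (sumZ (fun j => Atheta th dt dx e j * Atheta th dt dx e j))
    (sumZ (fun j => e j * D3 dx e j)) (sumZ (fun j => e j * Dp dx (Dm dx e) j))
    (sumZ (fun j => D3 dx e j * Dp dx (Dm dx e) j)) (sumZ (fun j => e j * Dc dx (fun i => e i ^ 2 / 2) j))) as FA.
  assert (Hsq : 0 <= sqrt 2 * sqrt dt / sqrt dx).
  { apply div_nonneg. apply Rmult_le_pos; apply sqrt_pos. apply sqrt_lt_R0; lra. }
  specialize (FA Hc Hdt Hdx Hth HU HUp HE HX Hsq HUpdx HSe HST HSL HSR HSM).
  specialize (FA ltac:(lra) ltac:(lra) ltac:(lra) ltac:(lra) ltac:(lra) ltac:(lra) Ia).
  specialize (FA B1' B2' B3' ltac:(lra) ltac:(lra) ltac:(lra) B7' ltac:(lra) ltac:(lra) HCS).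
  rewrite HBb.
  assert (Hfin : dx * SY <= dx * (sumZ (fun j => Atheta th dt dx e j * Atheta th dt dx e j) *
     (1 + dt * (U ^ 2 * (1 + dt / dx) + Up * (7 + dt / dx * (2 * c + 2 / 3 * E + 3 / 2 * U)) + Up ^ 2 * (sqrt 2 * sqrt dt / sqrt dx + dt ^ 2 / dx ^ 2) + 1 + 2 * c ^ 2 * dt / dx)) +
     dt * sumZ (fun j => eps j * eps j) * (1 + 4 * (dt / dx) + dt) +
     dt * ((dx - c * dt) * (dx / 6 * sumZ (fun j => Dp dx e j ^ 3)) - (dx - c * dt) * c * sumZ (fun j => Dp dx e j * Dp dx e j)) +
     dt ^ 2 * (U ^ 2 + (E ^ 2 * (1 + dx) + 2 * E * U + 2 * c / 3 * E) - c ^ 2) * sumZ (fun j => Dc dx e j * Dc dx e j) +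
     dt * (2 * (1 - th) * dt * (U + E + 1 / 2 + X / 2) - dx) * sumZ (fun j => Dp dx (Dc dx e) j * Dp dx (Dc dx e) j) +
     dt * (dt * (1 - 2 * th + (1 - th) * dx ^ 2 / 2 * (c + 1 / 2 + X / 2)) - dx ^ 3 / 4) * sumZ (fun j => D3 dx e j * D3 dx e j))).
  { apply Rmult_le_compat_l. lra. lra. }
  unfold Ea, Bc, Be, Bf. fold X. lra.
Qed.

Lemma nrmD_ext (dx : R) (f g : seqZ) : (forall j, f j = g j) -> nrmD dx f = nrmD dx g.
Proof. intros H. unfold nrmD, ipD. f_equal. f_equal. apply sumZ_ext. intros j. rewrite H. auto. Qed.

Theorem corollary3
  (u0 : R -> R) (u : R -> R -> R) (T c dt dx theta gamma : R)
  (v : nat -> seqZ) (n : nat)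
  (HT : 0 < T) (Hc : 0 < c) (Hdt : 0 < dt) (Hdx : 0 < dx)
  (Hu : kdv_solution u0 u T)
  (Huavg_l2 : forall k : nat, l2Z (uavg u0 u T dt dx k))
  (Hscheme : scheme c theta dt dx v)
  (Hv0 : forall j : Z, v O j = / dx * RInt u0 (xj dx j) (xj dx (j + 1)))
  (Hv_l2 : forall k : nat, l2Z (v k))
  (Hn : (n < Nsteps T dt)%nat)
  (Hgamma : 0 <= gamma < 1/2)
  (Htheta : 1/2 <= theta <= 1) :
  let w := uavg u0 u T dt dx in
  let e := fun k : nat => (fun j : Z => v k j - w k j) in
  let eps := consist c theta dt dx w n in
  let U := supnorm (w n) in
  let Up := supnorm (Dp dx (w n)) in
  let E := supnorm (e n) in
  let A := Atheta theta dt dx in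
  (nrmD dx (A (e (S n)))) ^ 2
  <= (nrmD dx (A (e n))) ^ 2 * (1 + dt * Ea c dt dx U Up E)
     + dt * (nrmD dx eps) ^ 2 * (1 + 4 * (dt / dx) + dt)
     + dt * ipD dx (Bb c dt dx (Dp dx (e n))) (fun j => (Dp dx (e n) j) ^ 2)
     + dt ^ 2 * Bc c dx U E * (nrmD dx (Dc dx (e n))) ^ 2
     + dt * Be theta gamma dt dx U E * (nrmD dx (Dp dx (Dc dx (e n)))) ^ 2
     + dt * Bf c theta gamma dt dx E * (nrmD dx (D3 dx (e n))) ^ 2.
Proof.
  intros w e eps U Up E A.
  assert (Hwn : l2Z (w n)) by apply Huavg_l2.
  assert (HwSn : l2Z (w (S n))) by apply Huavg_l2.
  assert (Hvn : l2Z (v n)) by apply Hv_l2.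
  assert (HvSn : l2Z (v (S n))) by apply Hv_l2.
  assert (Hen : l2Z (e n)) by (unfold e; l2t).
  assert (Heps : l2Z eps) by (unfold eps, consist; l2t).
  assert (Hcore := core c theta gamma dt dx (e n) (w n) eps Hc Hdt Hdx Htheta Hen Hwn Heps).
  cbv zeta in Hcore. unfold A.
  rewrite <- (nrmD_ext dx (fun j => Atheta theta dt dx (e n) j - dt * (D3 dx (e n) j + (Dc dx (fun i => w n i * e n i) j + Dc dx (fun i => e n i ^ 2 / 2) j) - c * dx / 2 * Dp dx (Dm dx (e n)) j + eps j))).
  - exact Hcore.
  - intros j. specialize (Hscheme n j).
    unfold eps, consist, e, Atheta in *. unfold D3, Dc, Dp, Dm in *. cbv beta in *.
    revert Hscheme. normidx (v (S n)). normidx (v n). normidx (w (S n)). normidx (w n). intros Hs. clearbody w.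
    match type of Hs with ?L = ?R =>
      match goal with |- ?X = ?Y =>
        assert (Hid : X - Y = dt * (R - L)) by (field; lra) end end.
    rewrite Hs in Hid. lra.
Qed.
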